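(* Let $n,p\in\mathbb{N}$, $0\le\lambda\le1$. Let $f$ be analytic in $\mathrm{U}=\{|z|<1\}$ of the form $f(z)=z^p+\sum_{k=p+n}^\infty a_kz^k$, put $\mathcal{F}_\lambda(z)=(1-\lambda)f(z)+\lambda zf'(z)$, and assume $\mathcal{F}_\lambda(z)\mathcal{F}_\lambda'(z)\neq0$ for all $z\in\mathrm{U}\setminus\{0\}$. Let $M\ge p$. If $$\operatorname{Re}\left[-\frac{z\mathcal{F}_\lambda'(z)}{\mathcal{F}_\lambda(z)}+1+\frac{z\mathcal{F}_\lambda''(z)}{\mathcal{F}_\lambda'(z)}\right]<\frac{nM}{M+p},\quad z\in\mathrm{U},$$ then $$\left|\frac{z\mathcal{F}_\lambda'(z)}{\mathcal{F}_\lambda(z)}-p\right|<M,\quad z\in\mathrm{U}.$$ *)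

(* Defs.v *)
From Stdlib Require Import Reals.
From Coquelicot Require Import Coquelicot.
Open Scope C_scope.

Definition inU (z : C) : Prop := (Cmod z < 1)%R.

Definition Cderiv (f : C -> C) (z l : C) : Prop :=
  @is_derive C_AbsRing C_NormedModule f z l.

Definition Cseries (a : nat -> C) (z s : C) : Prop :=
  @is_series C_AbsRing C_NormedModule (fun k => a k * z ^ k) s.

(* F_lambda(z) = (1 - lambda) f(z) + lambda z f'(z), with f' given as f1 *)
Definition Flam (lam : R) (f f1 : C -> C) (z : C) : C :=
  (1 - RtoC lam) * f z + RtoC lam * z * f1 z.

(* Main.v *)
Require Import Defs.
From Stdlib Require Import Reals Lra Lia Psatz ClassicalEpsilon Classical FunctionalExtensionality.
From Coquelicot Require Import Coquelicot.
Open Scope C_scope.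

Definition CD (h : C -> C) (z l : C) : Prop :=
  forall eps : R, (0 < eps)%R -> exists del : R, (0 < del)%R /\
    forall y, (Cmod (y - z) < del)%R ->
      (Cmod (h y - h z - l * (y - z)) <= eps * Cmod (y - z))%R.

Lemma Cmod_le_sum (w : C) : (Cmod w <= Rabs (fst w) + Rabs (snd w))%R.
Proof.
  destruct w as [a b]. unfold Cmod; simpl.
  rewrite <- (sqrt_Rsqr (Rabs a + Rabs b)).
  2:{ pose proof (Rabs_pos a); pose proof (Rabs_pos b); lra. }
  apply sqrt_le_1_alt. unfold Rsqr.
  pose proof (Rabs_pos a); pose proof (Rabs_pos b).
  assert (a * a = Rabs a * Rabs a)%R by (rewrite <- Rabs_mult; rewrite Rabs_right; nra).
  assert (b * b = Rabs b * Rabs b)%R by (rewrite <- Rabs_mult; rewrite Rabs_right; nra).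
  nra.
Qed.

Lemma ball_C_Cmod (z y : C) (e : R) :
  ball z e y -> (Cmod (y - z) < 2 * e)%R.
Proof.
  destruct z as [a b], y as [c d]. intros [H1 H2].
  unfold ball in H1, H2; simpl in H1, H2. unfold AbsRing_ball, abs, minus, plus, opp in H1, H2; simpl in H1, H2.
  eapply Rle_lt_trans. apply Cmod_le_sum. simpl. lra.
Qed.

Lemma Cmod_ball_C (z y : C) (e : R) :
  (Cmod (y - z) < e)%R -> ball z e y.
Proof.
  destruct z as [a b], y as [c d]. intros H.
  split; unfold ball; simpl; unfold AbsRing_ball, abs, minus, plus, opp; simpl.
  - eapply Rle_lt_trans; [|exact H].
    pose proof (re_le_Cmod ((c,d) - (a,b))). simpl in H0. exact H0.
  - eapply Rle_lt_trans; [|exact H].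
    pose proof (re_le_Cmod (Ci * ((c,d) - (a,b)))). rewrite Cmod_mult, Cmod_Ci, Rmult_1_l in H0.
    simpl in H0. replace (0 * (c + - a) - 1 * (d + - b))%R with (- (d + - b))%R in H0 by ring.
    rewrite Rabs_Ropp in H0. exact H0.
Qed.

Lemma Cderiv_CD h z l : Cderiv h z l -> CD h z l.
Proof.
  intros [_ Hd] eps Heps.
  specialize (Hd z (fun P H => H)).
  specialize (Hd (mkposreal eps Heps)).
  destruct Hd as [[e He] Hb]. simpl in Hb.
  exists e. split. lra.
  intros y Hy. specialize (Hb y).
  unfold ball in Hb; simpl in Hb; unfold AbsRing_ball, abs, minus, plus, opp in Hb; simpl in Hb.
  replace (y + - z) with (y - z) in Hb by ring.
  specialize (Hb Hy).
  idtac. 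
  unfold minus, plus, opp, scal, norm in Hb; simpl in Hb. unfold abs, mult in Hb; simpl in Hb.
  replace (h y - h z - l * (y - z)) with (h y + - h z + - ((y - z) * l)) by ring. exact Hb.
Qed.

Lemma CD_Cderiv h z l : CD h z l -> Cderiv h z l.
Proof.
  intros H. split.
  - apply is_linear_scal_l.
  - intros x Hx.
    assert (x = z). {
      destruct (Ceq_dec x z) as [E|E]; [exact E|exfalso].
      assert (He : (0 < Cmod (z - x))%R) by (apply Cmod_gt_0; intro E2; apply E; apply Ceq_minus in E2; auto).
      specialize (Hx (fun y => (Cmod (y - x) < Cmod (z - x) / 2)%R)).
      destruct Hx as [[d Hd] Hb].
      { exists (mkposreal _ (Rdiv_lt_0_compat _ 2 He ltac:(lra))). intros y Hy. simpl in Hy.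
        unfold ball in Hy; simpl in Hy; unfold AbsRing_ball, abs, minus, plus, opp in Hy; simpl in Hy.
        replace (y + - x) with (y - x) in Hy by ring. exact Hy. }
      specialize (Hb z). simpl in Hb.
      lapply Hb; [intro; lra|]. unfold ball; simpl; unfold AbsRing_ball, abs, minus, plus, opp; simpl. replace (z + - z) with (RtoC 0) by ring. rewrite Cmod_0. lra. }
    subst x.
    intros [eps Heps]. destruct (H eps Heps) as [d [Hd Hb]].
    exists (mkposreal d Hd). intros y Hy. simpl in Hy.
    unfold ball in Hy; simpl in Hy; unfold AbsRing_ball, abs, minus, plus, opp in Hy; simpl in Hy.
    replace (y + - z) with (y - z) in Hy by ring.
    specialize (Hb y Hy).
    unfold minus, plus, opp, scal, norm; simpl. unfold abs, mult; simpl.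
    unfold minus, plus, opp, scal; simpl. unfold mult; simpl.
    replace (h y + - h z + - ((y + - z) * l)) with (h y - h z - l * (y - z)) by ring.
    replace (y + - z) with (y - z) by ring. exact Hb.
Qed.

Lemma Cderiv2_CD h z l : @is_derive C_AbsRing (AbsRing_NormedModule C_AbsRing) h z l -> CD h z l.
Proof.
  intros [_ Hd] eps Heps.
  specialize (Hd z (fun P H => H)).
  specialize (Hd (mkposreal eps Heps)).
  destruct Hd as [[e He] Hb]. simpl in Hb.
  exists e. split. lra.
  intros y Hy. specialize (Hb y).
  unfold ball in Hb; simpl in Hb; unfold AbsRing_ball, abs, minus, plus, opp in Hb; simpl in Hb.
  replace (y + - z) with (y - z) in Hb by ring.
  specialize (Hb Hy).
  idtac. 
  unfold minus, plus, opp, scal, norm in Hb; simpl in Hb. unfold abs, mult in Hb; simpl in Hb.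
  replace (h y - h z - l * (y - z)) with (h y + - h z + - ((y - z) * l)) by ring. exact Hb.
Qed.

Lemma CD_Cderiv2 h z l : CD h z l -> @is_derive C_AbsRing (AbsRing_NormedModule C_AbsRing) h z l.
Proof.
  intros H. split.
  - apply is_linear_scal_l.
  - intros x Hx.
    assert (x = z). {
      destruct (Ceq_dec x z) as [E|E]; [exact E|exfalso].
      assert (He : (0 < Cmod (z - x))%R) by (apply Cmod_gt_0; intro E2; apply E; apply Ceq_minus in E2; auto).
      specialize (Hx (fun y => (Cmod (y - x) < Cmod (z - x) / 2)%R)).
      destruct Hx as [[d Hd] Hb].
      { exists (mkposreal _ (Rdiv_lt_0_compat _ 2 He ltac:(lra))). intros y Hy. simpl in Hy.
        unfold ball in Hy; simpl in Hy; unfold AbsRing_ball, abs, minus, plus, opp in Hy; simpl in Hy.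
        replace (y + - x) with (y - x) in Hy by ring. exact Hy. }
      specialize (Hb z). simpl in Hb.
      lapply Hb; [intro; lra|]. unfold ball; simpl; unfold AbsRing_ball, abs, minus, plus, opp; simpl. replace (z + - z) with (RtoC 0) by ring. rewrite Cmod_0. lra. }
    subst x.
    intros [eps Heps]. destruct (H eps Heps) as [d [Hd Hb]].
    exists (mkposreal d Hd). intros y Hy. simpl in Hy.
    unfold ball in Hy; simpl in Hy; unfold AbsRing_ball, abs, minus, plus, opp in Hy; simpl in Hy.
    replace (y + - z) with (y - z) in Hy by ring.
    specialize (Hb y Hy).
    unfold minus, plus, opp, scal, norm; simpl. unfold abs, mult; simpl.
    unfold minus, plus, opp, scal; simpl. unfold mult; simpl.
    replace (h y + - h z + - ((y + - z) * l)) with (h y - h z - l * (y - z)) by ring.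
    replace (y + - z) with (y - z) by ring. exact Hb.
Qed.

Lemma Cmod_sub_tri (a b : C) : (Cmod a - Cmod b <= Cmod (a - b))%R.
Proof.
  pose proof (Cmod_triangle (a - b) b). replace (a - b + b) with a in H by ring. lra.
Qed.

Lemma CD_cont h z l : CD h z l -> forall eps, (0 < eps)%R -> exists del, (0 < del)%R /\
  forall y, (Cmod (y - z) < del)%R -> (Cmod (h y - h z) < eps)%R.
Proof.
  intros H eps Heps. destruct (H 1%R ltac:(lra)) as [d [Hd Hb]].
  exists (Rmin d (eps / (2 * (1 + Cmod l))))%R. split.
  { apply Rmin_pos; auto. pose proof (Cmod_ge_0 l). apply Rdiv_lt_0_compat; lra. }
  intros y Hy. pose proof (Cmod_ge_0 l).
  assert (Hy1 : (Cmod (y - z) < d)%R) by (eapply Rlt_le_trans; [exact Hy| apply Rmin_l]).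
  assert (Hy2 : (Cmod (y - z) < eps / (2 * (1 + Cmod l)))%R) by (eapply Rlt_le_trans; [exact Hy| apply Rmin_r]).
  specialize (Hb y Hy1).
  replace (h y - h z) with ((h y - h z - l * (y - z)) + l * (y - z)) by ring.
  eapply Rle_lt_trans. apply Cmod_triangle. rewrite Cmod_mult.
  pose proof (Cmod_ge_0 (y - z)).
  assert (Cmod (y - z) * (2 * (1 + Cmod l)) < eps)%R.
  { apply (Rmult_lt_compat_r (2 * (1 + Cmod l))) in Hy2; [|lra].
    unfold Rdiv in Hy2. rewrite Rmult_assoc, Rinv_l in Hy2; lra. }
  nra.
Qed.

Lemma CD_unique h z l1 l2 : CD h z l1 -> CD h z l2 -> l1 = l2.
Proof.
  intros H1 H2. destruct (Ceq_dec l1 l2) as [E|E]; auto. exfalso.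
  assert (Hp : (0 < Cmod (l1 - l2))%R).
  { apply Cmod_gt_0. intro E2. apply E. apply (proj2 (Ceq_minus l1 l2)). auto. }
  set (e := (Cmod (l1 - l2) / 4)%R).
  destruct (H1 e ltac:(unfold e; lra)) as [d1 [Hd1 B1]].
  destruct (H2 e ltac:(unfold e; lra)) as [d2 [Hd2 B2]].
  set (s := (Rmin d1 d2 / 2)%R).
  assert (Hs : (0 < s)%R) by (unfold s; pose proof (Rmin_pos d1 d2 Hd1 Hd2); lra).
  assert (Hsd1 : (s < d1)%R) by (unfold s; pose proof (Rmin_l d1 d2); pose proof (Rmin_pos d1 d2 Hd1 Hd2); lra).
  assert (Hsd2 : (s < d2)%R) by (unfold s; pose proof (Rmin_r d1 d2); pose proof (Rmin_pos d1 d2 Hd1 Hd2); lra).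
  set (y := z + RtoC s).
  assert (Hy : Cmod (y - z) = s). { unfold y. replace (z + s - z) with (RtoC s) by ring. rewrite Cmod_R. apply Rabs_right. lra. }
  specialize (B1 y ltac:(lra)). specialize (B2 y ltac:(lra)).
  rewrite Hy in B1, B2.
  assert (Cmod ((l1 - l2) * (y - z)) <= 2 * e * s)%R.
  { replace ((l1 - l2) * (y - z)) with ((h y - h z - l2 * (y - z)) - (h y - h z - l1 * (y - z))) by ring.
    eapply Rle_trans. unfold Cminus at 1. apply Cmod_triangle. rewrite Cmod_opp. lra. }
  rewrite Cmod_mult, Hy in H. unfold e in H. nra.
Qed.

Lemma CD_ext h1 h2 z l : (exists del, (0 < del)%R /\ forall y, (Cmod (y - z) < del)%R -> h1 y = h2 y) ->
  CD h1 z l -> CD h2 z l.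
Proof.
  intros [d [Hd He]] H eps Heps. destruct (H eps Heps) as [d1 [Hd1 B]].
  exists (Rmin d d1). split. apply Rmin_pos; auto.
  intros y Hy. rewrite <- !He.
  - apply B. eapply Rlt_le_trans; [exact Hy|apply Rmin_r].
  - replace (z - z) with (RtoC 0) by ring. rewrite Cmod_0. auto.
  - eapply Rlt_le_trans; [exact Hy|apply Rmin_l].
Qed.

Lemma CD_plus f g z a b : CD f z a -> CD g z b -> CD (fun x => f x + g x) z (a + b).
Proof.
  intros Hf Hg. apply Cderiv_CD. apply CD_Cderiv in Hf, Hg. unfold Cderiv in *.
  exact (@is_derive_plus C_AbsRing C_NormedModule f g z a b Hf Hg).
Qed.

Lemma CD_mult f g z a b : CD f z a -> CD g z b -> CD (fun x => f x * g x) z (a * g z + f z * b).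
Proof.
  intros Hf Hg. apply Cderiv2_CD. apply CD_Cderiv2 in Hf, Hg.
  assert (Hf2 : @is_derive C_AbsRing (AbsRing_NormedModule C_AbsRing) f z a) by exact Hf.
  assert (Hg2 : @is_derive C_AbsRing (AbsRing_NormedModule C_AbsRing) g z b) by exact Hg.
  exact (@is_derive_mult C_AbsRing f g z a b Hf2 Hg2 Cmult_comm).
Qed.

Lemma CD_const c z : CD (fun _ => c) z 0.
Proof.
  apply Cderiv_CD. unfold Cderiv. exact (@is_derive_const C_AbsRing C_NormedModule c z).
Qed.

Lemma CD_id z : CD (fun x => x) z 1.
Proof.
  apply Cderiv2_CD. exact (@is_derive_id C_AbsRing z).
Qed.

Lemma CD_comp f g z a b : CD g z a -> CD f (g z) b -> CD (fun x => f (g x)) z (a * b).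
Proof.
  intros Hg Hf. apply Cderiv_CD. apply CD_Cderiv in Hf. apply CD_Cderiv2 in Hg. unfold Cderiv in *.
  exact (@is_derive_comp C_AbsRing C_NormedModule f g z b a Hf Hg).
Qed.

Lemma CD_scal c f z a : CD f z a -> CD (fun x => c * f x) z (c * a).
Proof.
  intros H. pose proof (CD_mult (fun _ => c) f z 0 a (CD_const c z) H) as H2.
  replace (c * a) with (0 * f z + c * a) by ring. exact H2.
Qed.

Lemma CD_opp f z a : CD f z a -> CD (fun x => - f x) z (- a).
Proof.
  intros H. pose proof (CD_scal (-1) f z a H) as H2.
  replace (-a) with (-1 * a) by ring.
  eapply CD_ext; [|exact H2]. exists 1%R. split. lra. intros; ring.
Qed.

Lemma CD_minus f g z a b : CD f z a -> CD g z b -> CD (fun x => f x - g x) z (a - b).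
Proof.
  intros Hf Hg. apply CD_plus; auto. apply CD_opp; auto.
Qed.

Lemma CD_pow (m : nat) z : CD (fun x => x ^ S m) z (RtoC (INR (S m)) * z ^ m).
Proof.
  induction m.
  - replace (RtoC (INR 1) * z ^ 0) with (RtoC 1) by (simpl; ring).
    eapply CD_ext; [|apply CD_id]. exists 1%R. split. lra. intros; simpl; ring.
  - pose proof (CD_mult (fun x => x) (fun x => x ^ S m) z 1 _ (CD_id z) IHm) as H.
    eapply CD_ext in H. 2:{ exists 1%R. split. lra. intros y _. instantiate (1 := fun x => x ^ S (S m)). simpl. reflexivity. }
    replace (RtoC (INR (S (S m))) * z ^ S m) with (1 * z ^ S m + z * (RtoC (INR (S m)) * z ^ m)).
    exact H.
    rewrite (S_INR (S m)). rewrite RtoC_plus. simpl Cpow. ring.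
Qed.

Lemma CD_inv_pt (w : C) : w <> 0 -> CD Cinv w (- / (w * w)).
Proof.
  intros Hw. unfold CD. intros eps Heps.
  assert (Hm : (0 < Cmod w)%R) by exact (proj1 (Cmod_gt_0 w) Hw).
  exists (Rmin (Cmod w / 2) (eps * (Cmod w * Cmod w * Cmod w) / 2))%R. split.
  { apply Rmin_pos. lra. apply Rdiv_lt_0_compat; [|lra]. repeat apply Rmult_lt_0_compat; auto. }
  intros y Hy.
  assert (Hy1 : (Cmod (y - w) < Cmod w / 2)%R) by (eapply Rlt_le_trans; [exact Hy|apply Rmin_l]).
  assert (Hy2 : (Cmod (y - w) < eps * (Cmod w * Cmod w * Cmod w) / 2)%R) by (eapply Rlt_le_trans; [exact Hy|apply Rmin_r]).
  assert (Hyl : (Cmod w / 2 <= Cmod y)%R).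
  { pose proof (Cmod_sub_tri w (w - y)). replace (w - (w - y)) with y in H by ring.
    replace (w - y) with (- (y - w)) in H by ring. rewrite Cmod_opp in H. lra. }
  assert (Hy0 : y <> 0). { intro E. subst y. rewrite Cmod_0 in Hyl. lra. }
  replace (/ y - / w - - / (w * w) * (y - w)) with ((y - w) * (y - w) / (y * (w * w))) by (field; auto).
  rewrite Cmod_div. 2:{ apply Cmult_neq_0; auto. apply Cmult_neq_0; auto. }
  rewrite !Cmod_mult.
  pose proof (Cmod_ge_0 (y - w)).
  apply Rle_trans with (Cmod (y - w) * Cmod (y - w) / (Cmod w / 2 * (Cmod w * Cmod w)))%R.
  { unfold Rdiv. apply Rmult_le_compat_l. nra. apply Rinv_le_contravar.
    apply Rmult_lt_0_compat. lra. nra. apply Rmult_le_compat_r. nra. auto. }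
  apply (Rmult_le_reg_r (Cmod w / 2 * (Cmod w * Cmod w))). apply Rmult_lt_0_compat. lra. nra.
  unfold Rdiv at 1. rewrite Rmult_assoc, Rinv_l. 2:{ apply Rgt_not_eq. apply Rmult_lt_0_compat. lra. nra. }
  nra.
Qed.

Lemma CD_inv f z a : CD f z a -> f z <> 0 -> CD (fun x => / f x) z (a * - / (f z * f z)).
Proof.
  intros H Hz. apply (CD_comp Cinv f z a _ H). apply CD_inv_pt; auto.
Qed.

Lemma CD_div f g z a b : CD f z a -> CD g z b -> g z <> 0 ->
  CD (fun x => f x / g x) z ((a * g z - f z * b) / (g z * g z)).
Proof.
  intros Hf Hg Hz. pose proof (CD_mult f (fun x => / g x) z a _ Hf (CD_inv g z b Hg Hz)) as H.
  replace ((a * g z - f z * b) / (g z * g z)) with (a * / g z + f z * (b * - / (g z * g z))) by (field; auto).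
  exact H.
Qed.

Lemma RC (h : C -> C) (P Q : R -> R) (t P' Q' : R) (l : C) :
  derivable_pt_lim P t P' -> derivable_pt_lim Q t Q' -> CD h (P t, Q t) l ->
  derivable_pt_lim (fun s => Re (h (P s, Q s))) t (Re (l * (P', Q'))).
Proof.
  intros HP HQ Hh eps Heps.
  set (D := (P', Q') : C).
  pose proof (Cmod_ge_0 l) as Hl0. pose proof (Cmod_ge_0 D) as HD0.
  set (e1 := (eps / (2 * (Cmod D + 1)))%R).
  assert (He1 : (0 < e1)%R) by (unfold e1; apply Rdiv_lt_0_compat; lra).
  set (eta := Rmin 1 (eps / (2 * (Cmod l + 1)))).
  assert (Heta : (0 < eta)%R) by (unfold eta; apply Rmin_pos; [lra| apply Rdiv_lt_0_compat; lra]).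
  destruct (Hh e1 He1) as [d1 [Hd1 B1]].
  destruct (HP (eta / 2)%R ltac:(lra)) as [dP HdP].
  destruct (HQ (eta / 2)%R ltac:(lra)) as [dQ HdQ].
  assert (Hd1' : (0 < d1 / (Cmod D + 1))%R) by (apply Rdiv_lt_0_compat; lra).
  exists (mkposreal _ (Rmin_pos _ _ (Rmin_pos _ _ (cond_pos dP) (cond_pos dQ)) Hd1')).
  simpl. intros s Hs0 Hs.
  assert (HsP : (Rabs s < dP)%R) by (eapply Rlt_le_trans; [exact Hs|]; eapply Rle_trans; apply Rmin_l).
  assert (HsQ : (Rabs s < dQ)%R) by (eapply Rlt_le_trans; [exact Hs|]; eapply Rle_trans; [apply Rmin_l|apply Rmin_r]).
  assert (Hs1 : (Rabs s < d1 / (Cmod D + 1))%R) by (eapply Rlt_le_trans; [exact Hs|apply Rmin_r]).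
  specialize (HdP s Hs0 HsP). specialize (HdQ s Hs0 HsQ).
  assert (Has : (0 < Rabs s)%R) by (apply Rabs_pos_lt; auto).
  set (dg := ((P (t + s) - P t)%R, (Q (t + s) - Q t)%R) : C).
  assert (Hdg : (Cmod (dg - RtoC s * D) <= eta * Rabs s)%R).
  { eapply Rle_trans. apply Cmod_le_sum. unfold dg, D. simpl.
    replace (P (t + s) - P t + - (s * P' - 0 * Q'))%R with (s * ((P (t + s) - P t) / s - P'))%R by (field; auto).
    replace (Q (t + s) - Q t + - (s * Q' + 0 * P'))%R with (s * ((Q (t + s) - Q t) / s - Q'))%R by (field; auto).
    rewrite !Rabs_mult. nra. }
  assert (Hdgm : (Cmod dg <= (Cmod D + 1) * Rabs s)%R).
  { replace dg with ((dg - RtoC s * D) + RtoC s * D) by ring.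
    eapply Rle_trans. apply Cmod_triangle. rewrite Cmod_mult, Cmod_R.
    assert (eta <= 1)%R by (unfold eta; apply Rmin_l). nra. }
  assert (Hpt : (P (t + s)%R, Q (t + s)%R) = (P t, Q t) + dg).
  { unfold dg. apply injective_projections; simpl; ring. }
  assert (Hdg1 : (Cmod ((P (t + s)%R, Q (t + s)%R) - (P t, Q t)) < d1)%R).
  { rewrite Hpt. replace ((P t, Q t) + dg - (P t, Q t)) with dg by ring.
    eapply Rle_lt_trans. exact Hdgm.
    assert (E : ((Cmod D + 1) * (d1 / (Cmod D + 1)) = d1)%R) by (field; lra).
    apply (Rmult_lt_compat_l (Cmod D + 1)) in Hs1; [|lra]. lra. }
  specialize (B1 _ Hdg1).
  rewrite Hpt in B1. replace ((P t, Q t) + dg - (P t, Q t)) with dg in B1 by ring.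
  set (E := h ((P t, Q t) + dg) - h (P t, Q t) - RtoC s * (l * D)).
  assert (HE : E = (h ((P t, Q t) + dg) - h (P t, Q t) - l * dg) + l * (dg - RtoC s * D)) by (unfold E; ring).
  assert (HEb : (Cmod E <= e1 * ((Cmod D + 1) * Rabs s) + Cmod l * (eta * Rabs s))%R).
  { rewrite HE. eapply Rle_trans. apply Cmod_triangle. rewrite Cmod_mult.
    apply Rplus_le_compat. eapply Rle_trans. exact B1. apply Rmult_le_compat_l; lra.
    apply Rmult_le_compat_l; lra. }
  assert (HEr : ((Re (h ((P t, Q t) + dg)%C) - Re (h (P t, Q t))) / s - Re (l * D)%C = Re E / s)%R).
  { unfold E. destruct (h ((P t, Q t) + dg)) as [a1 b1]. destruct (h (P t, Q t)) as [a2 b2]. destruct l as [l1 l2]. unfold D. simpl. field. auto. }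
  replace (fst l * P' - snd l * Q')%R with (Re (l * D)) by (unfold D; destruct l; simpl; ring). rewrite Hpt. rewrite HEr. unfold Rdiv. rewrite Rabs_mult, Rabs_inv.
  apply (Rmult_lt_reg_r (Rabs s)); auto. rewrite Rmult_assoc, Rinv_l; [|lra]. rewrite Rmult_1_r.
  eapply Rle_lt_trans. apply re_le_Cmod. eapply Rle_lt_trans. exact HEb.
  assert (He1e : (e1 * (Cmod D + 1) = eps / 2)%R) by (unfold e1; field; lra).
  assert (Hetal : (eta * (Cmod l + 1) <= eps / 2)%R).
  { unfold eta. pose proof (Rmin_r 1 (eps / (2 * (Cmod l + 1)))).
    apply (Rmult_le_compat_r (Cmod l + 1)) in H; [|lra].
    replace (eps / (2 * (Cmod l + 1)) * (Cmod l + 1))%R with (eps / 2)%R in H by (field; lra). lra. }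
  nra.
Qed.

Lemma RC_im (h : C -> C) (P Q : R -> R) (t P' Q' : R) (l : C) :
  derivable_pt_lim P t P' -> derivable_pt_lim Q t Q' -> CD h (P t, Q t) l ->
  derivable_pt_lim (fun s => Im (h (P s, Q s))) t (Im (l * (P', Q'))).
Proof.
  intros HP HQ Hh.
  pose proof (RC (fun x => - Ci * h x) P Q t P' Q' (- Ci * l) HP HQ (CD_scal _ _ _ _ Hh)) as H.
  replace (Im (l * (P', Q'))) with (Re (- Ci * l * (P', Q'))).
  2:{ destruct l as [a b]. simpl. ring. }
  replace (fun s => Im (h (P s, Q s))) with (fun s => Re (- Ci * h (P s, Q s))).
  exact H. apply functional_extensionality. intro s. destruct (h (P s, Q s)) as [a b]. simpl. ring.
Qed.

Lemma series_norm_le (a : nat -> C) (s : C) (c : nat -> R) (S : R) :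
  @is_series C_AbsRing C_NormedModule a s -> (forall k, (Cmod (a k) <= c k)%R) ->
  is_series c S -> (Cmod s <= S)%R.
Proof.
  intros Ha Hb Hc.
  assert (Hn : filterlim (fun N => @norm C_AbsRing C_NormedModule (sum_n a N)) eventually (locally (@norm C_AbsRing C_NormedModule s))).
  { eapply filterlim_comp. exact Ha. apply filterlim_norm. }
  assert (H := filterlim_le (F := eventually) (fun N => @norm C_AbsRing C_NormedModule (sum_n a N)) (sum_n c) (@norm C_AbsRing C_NormedModule s) S).
  change (Cmod s) with (@norm C_AbsRing C_NormedModule s). simpl in H. apply H; auto.
  exists 0%nat. intros N _. unfold sum_n.
  eapply Rle_trans. apply (@norm_sum_n_m C_AbsRing C_NormedModule a 0 N). apply sum_n_m_le. intros k. change (Cmod (a k) <= c k)%R. auto.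
Qed.

Lemma series_terms_bounded (a : nat -> C) (s : C) :
  @is_series C_AbsRing C_NormedModule a s -> exists B, (0 <= B)%R /\ forall k, (Cmod (a k) <= B)%R.
Proof.
  intros Ha.
  assert (Hc : Cauchy_series a) by (apply (@Cauchy_ex_series C_AbsRing C_CompleteNormedModule); exists s; exact Ha).
  destruct (Hc (mkposreal 1 Rlt_0_1)) as [N HN].
  assert (Hfin : forall n, exists B, (0 <= B)%R /\ forall k, (k <= n)%nat -> (Cmod (a k) <= B)%R).
  { induction n.
    - exists (Cmod (a 0%nat)). split. apply Cmod_ge_0. intros k Hk. replace k with 0%nat by lia. lra.
    - destruct IHn as [B [HB0 HB]]. exists (Rmax B (Cmod (a (S n)))). split.
      eapply Rle_trans; [exact HB0|apply Rmax_l].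
      intros k Hk. destruct (Nat.eq_dec k (S n)) as [->|Hne]. apply Rmax_r.
      eapply Rle_trans; [apply HB; lia|apply Rmax_l]. }
  destruct (Hfin N) as [B [HB0 HB]].
  exists (Rmax B 1). split. eapply Rle_trans; [exact HB0|apply Rmax_l].
  intros k. destruct (Compare_dec.le_lt_dec k N) as [Hk|Hk].
  - eapply Rle_trans; [apply HB; auto|apply Rmax_l].
  - specialize (HN k k ltac:(lia) ltac:(lia)). rewrite sum_n_n in HN. change (Cmod (a k) < 1)%R in HN.
    simpl in HN. eapply Rle_trans; [|apply Rmax_r]. lra.
Qed.

Lemma ex_series_sq (q : R) : (0 < q < 1)%R -> ex_series (fun k => ((INR k + 1) * (INR k + 1) * q ^ k)%R).
Proof.
  intros Hq.
  assert (H : ex_series (fun k => Rabs ((INR k + 1) * (INR k + 1) * q ^ k))).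
  { apply (ex_series_DAlembert _ q). lra.
    - intros n. pose proof (pos_INR n). pose proof (pow_lt q n ltac:(lra)). nra.
    - apply is_lim_seq_ext with (fun n => ((1 + / (INR n + 1)) * (1 + / (INR n + 1)) * q)%R).
      + intros n. pose proof (pos_INR n). pose proof (pow_lt q n ltac:(lra)).
        assert (Hi : (0 < / (INR n + 1))%R) by (apply Rinv_0_lt_compat; lra).
        symmetry. rewrite Rabs_right. 2:{ apply Rle_ge. rewrite S_INR. simpl. unfold Rdiv; apply Rmult_le_pos; [|left; apply Rinv_0_lt_compat; repeat apply Rmult_lt_0_compat; lra]. repeat apply Rmult_le_pos; lra. }
        rewrite S_INR. simpl. field. lra.
      + replace (Finite q) with (Rbar_mult (Rbar_mult (Rbar_plus 1 0) (Rbar_plus 1 0)) q) by (simpl; f_equal; ring).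
        assert (Hi : is_lim_seq (fun n => / (INR n + 1))%R 0).
        { replace (Finite 0) with (Rbar_inv p_infty) by reflexivity.
          apply is_lim_seq_inv. eapply is_lim_seq_plus. apply is_lim_seq_INR. apply is_lim_seq_const.
          reflexivity. discriminate. }
        replace (Rbar_mult (Rbar_mult (Rbar_plus 1 0) (Rbar_plus 1 0)) q) with (Finite (((1+0)*(1+0))*q)%R) by (simpl; reflexivity).
        apply is_lim_seq_mult'. apply is_lim_seq_mult'. apply is_lim_seq_plus'. apply is_lim_seq_const. exact Hi.
        apply is_lim_seq_plus'. apply is_lim_seq_const. exact Hi.
        apply is_lim_seq_const. }
  eapply ex_series_ext; [|exact H]. intros n. apply Rabs_right.
  pose proof (pos_INR n). pose proof (pow_lt q n ltac:(lra)). nra.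
Qed.


Lemma isC_ext (a b : nat -> C) (la lb : C) : (forall n, a n = b n) -> la = lb ->
  @is_series C_AbsRing C_NormedModule a la -> @is_series C_AbsRing C_NormedModule b lb.
Proof. intros H E Ha. subst lb. exact (is_series_ext a b la H Ha). Qed.

Lemma isC_scal (c : C) (a : nat -> C) (l : C) :
  @is_series C_AbsRing C_NormedModule a l -> @is_series C_AbsRing C_NormedModule (fun n => c * a n) (c * l).
Proof. intros H. exact (@is_series_scal C_AbsRing C_NormedModule c a l H). Qed.

Lemma isC_minus (a b : nat -> C) (la lb : C) :
  @is_series C_AbsRing C_NormedModule a la -> @is_series C_AbsRing C_NormedModule b lb ->
  @is_series C_AbsRing C_NormedModule (fun n => a n - b n) (la - lb).
Proof. intros Ha Hb. exact (@is_series_minus C_AbsRing C_NormedModule a b la lb Ha Hb). Qed.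

Lemma isC_plus (a b : nat -> C) (la lb : C) :
  @is_series C_AbsRing C_NormedModule a la -> @is_series C_AbsRing C_NormedModule b lb ->
  @is_series C_AbsRing C_NormedModule (fun n => a n + b n) (la + lb).
Proof. intros Ha Hb. exact (@is_series_plus C_AbsRing C_NormedModule a b la lb Ha Hb). Qed.

Lemma isC_shift (a : nat -> C) (l : C) : a 0%nat = 0 ->
  @is_series C_AbsRing C_NormedModule (fun k => a (S k)) l -> @is_series C_AbsRing C_NormedModule a l.
Proof.
  intros H0 H. apply is_series_decr_1.
  match goal with |- is_series _ ?L => replace L with l end. exact H.
  unfold plus, opp; simpl. rewrite H0. ring.
Qed.

Lemma isC_unshift (a : nat -> C) (l : C) :
  @is_series C_AbsRing C_NormedModule a l -> @is_series C_AbsRing C_NormedModule (fun k => a (S k)) (l - a 0%nat).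
Proof.
  intros H. pose proof (@is_series_incr_1 C_AbsRing C_NormedModule a (l - a 0%nat)) as H1.
  apply H1. match goal with |- is_series _ ?L => replace L with l end. exact H.
  unfold plus; simpl. ring.
Qed.

Definition PS (b : nat -> C) (z : C) : C :=
  epsilon (inhabits (RtoC 0)) (fun s => Cseries b z s).

Definition convU (b : nat -> C) := forall z, inU z -> exists s, Cseries b z s.

Definition Db (b : nat -> C) (k : nat) : C := RtoC (INR (S k)) * b (S k).

Lemma PS_spec b z : (exists s, Cseries b z s) -> Cseries b z (PS b z).
Proof. intros H. unfold PS. apply epsilon_spec. exact H. Qed.

Lemma Cseries_unique b z s1 s2 : Cseries b z s1 -> Cseries b z s2 -> s1 = s2.
Proof.
  intros H1 H2. unfold Cseries, is_series in *.
  exact (@filterlim_locally_unique nat C_AbsRing C_NormedModule eventually _ _ s1 s2 H1 H2).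
Qed.

Lemma e_bound (y z : C) (r : R) (k : nat) : (0 <= r)%R -> (Cmod y <= r)%R -> (Cmod z <= r)%R ->
  (r ^ 2 * Cmod (y ^ k - z ^ k - RtoC (INR k) * z ^ (pred k) * (y - z)) <= INR k * INR k * r ^ k * Cmod (y - z) ^ 2)%R.
Proof.
  intros Hr Hy Hz.
  assert (Hzp : forall m, (Cmod (z ^ m) <= r ^ m)%R).
  { intros m. rewrite Cmod_pow. apply pow_incr. split; auto. apply Cmod_ge_0. }
  assert (Hmain : forall m, (r ^ 2 * Cmod (y ^ S m - z ^ S m - RtoC (INR (S m)) * z ^ m * (y - z)) <= INR (S m) * INR (S m) * r ^ S m * Cmod (y - z) ^ 2)%R).
  { induction m.
    - replace (y ^ 1 - z ^ 1 - RtoC (INR 1) * z ^ 0 * (y - z)) with (RtoC 0) by (simpl; ring).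
      rewrite Cmod_0. pose proof (Cmod_ge_0 (y - z)). simpl. nra.
    - replace (y ^ S (S m) - z ^ S (S m) - RtoC (INR (S (S m))) * z ^ S m * (y - z))
        with (RtoC (INR (S m)) * z ^ m * ((y - z) * (y - z)) + y * (y ^ S m - z ^ S m - RtoC (INR (S m)) * z ^ m * (y - z))).
      2:{ rewrite (S_INR (S m)). rewrite RtoC_plus. simpl Cpow. ring. }
      eapply Rle_trans. apply Rmult_le_compat_l. nra. apply Cmod_triangle.
      rewrite !Cmod_mult, Cmod_R, Rabs_right by (apply Rle_ge, pos_INR).
      set (E := Cmod (y ^ S m - z ^ S m - RtoC (INR (S m)) * z ^ m * (y - z))) in *.
      set (h := Cmod (y - z)) in *.
      pose proof (Hzp m). pose proof (pos_INR (S m)). pose proof (Cmod_ge_0 y).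
      assert (Hh : (0 <= h)%R) by apply Cmod_ge_0.
      assert (HE : (0 <= E)%R) by apply Cmod_ge_0.
      pose proof (pow_le r m Hr).
      assert (Hr2 : (r ^ 2 * (INR (S m) * Cmod (z ^ m) * (h * h)) <= INR (S m) * r ^ S (S m) * (h * h))%R).
      { replace (r ^ S (S m))%R with (r ^ 2 * r ^ m)%R by (simpl; ring).
        assert (0 <= h * h)%R by nra.
        apply Rle_trans with (r ^ 2 * (INR (S m) * r ^ m * (h * h)))%R.
        apply Rmult_le_compat_l. nra. apply Rmult_le_compat_r. auto. apply Rmult_le_compat_l; auto. lra. }
      assert (Hr3 : (r ^ 2 * (Cmod y * E) <= r * (INR (S m) * INR (S m) * r ^ S m * h ^ 2))%R).
      { replace (r ^ 2 * (Cmod y * E))%R with (Cmod y * (r ^ 2 * E))%R by ring.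
        apply Rle_trans with (r * (r ^ 2 * E))%R. apply Rmult_le_compat_r. nra. auto.
        apply Rmult_le_compat_l; auto. }
      rewrite (S_INR (S m)).
      replace (r ^ S (S m))%R with (r * r ^ S m)%R by (simpl; ring).
      replace (r * (INR (S m) * INR (S m) * r ^ S m * h ^ 2))%R with (INR (S m) * INR (S m) * (r * r ^ S m) * (h * h))%R in Hr3 by ring.
      replace (r ^ S (S m))%R with (r * r ^ S m)%R in Hr2 by (simpl; ring).
      assert (HX : (0 <= r * r ^ S m * (h * h))%R) by (apply Rmult_le_pos; [apply Rmult_le_pos; [auto| apply pow_le; auto]| nra]).
      replace (h ^ 2)%R with (h * h)%R by ring.
      set (X := (r * r ^ S m)%R) in *.
      assert (Hfin : ((INR (S m) + 1) * (INR (S m) + 1) * X * (h * h) - (INR (S m) * X * (h * h) + INR (S m) * INR (S m) * X * (h * h)) = (INR (S m) + 1) * (X * (h * h)))%R) by ring.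
      assert (0 <= (INR (S m) + 1) * (X * (h * h)))%R by (apply Rmult_le_pos; lra).
      rewrite Rmult_plus_distr_l. lra. }
  destruct k.
  - replace (y ^ 0 - z ^ 0 - RtoC (INR 0) * z ^ pred 0 * (y - z)) with (RtoC 0) by (simpl; ring).
    rewrite Cmod_0. simpl. lra.
  - apply Hmain.
Qed.

Lemma Cmod_RtoC_pos (r : R) : (0 <= r)%R -> Cmod (RtoC r) = r.
Proof. intros H. rewrite Cmod_R. apply Rabs_right. lra. Qed.

Lemma PSD (b : nat -> C) : convU b -> forall z, inU z ->
  CD (PS b) z (PS (Db b) z) /\ Cseries (Db b) z (PS (Db b) z).
Proof.
  intros Hb z Hz. unfold inU in Hz.
  set (r := Cmod z). pose proof (Cmod_ge_0 z) as Hr0. fold r in Hr0, Hz.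
  set (rho := ((1 + r) / 2)%R). set (rho' := ((r + rho) / 2)%R).
  assert (Hrho : (r < rho' /\ rho' < rho /\ rho < 1)%R) by (unfold rho', rho; lra).
  assert (HrhoU : inU (RtoC rho)) by (unfold inU; rewrite Cmod_RtoC_pos; lra).
  destruct (Hb _ HrhoU) as [s0 Hs0].
  destruct (series_terms_bounded _ _ Hs0) as [B [HB0 HB]].
  assert (HBk : forall k, (Cmod (b k) * rho ^ k <= B)%R).
  { intros k. specialize (HB k). rewrite Cmod_mult, Cmod_pow, Cmod_RtoC_pos in HB; lra. }
  set (q := (rho' / rho)%R).
  assert (Hq : (0 < q < 1)%R).
  { unfold q. split. apply Rdiv_lt_0_compat; lra. apply (Rmult_lt_reg_r rho). lra.
    unfold Rdiv. rewrite Rmult_assoc, Rinv_l; lra. }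
  assert (Hqr : (q * rho = rho')%R) by (unfold q; field; lra).
  destruct (ex_series_sq q Hq) as [Sq HSq].
  assert (HSq0 : (0 <= Sq)%R).
  { assert (H := filterlim_le (F := eventually) (fun _ => 0%R) (sum_n (fun k => ((INR k + 1) * (INR k + 1) * q ^ k)%R)) 0%R Sq).
    simpl in H. apply H.
    - exists 0%nat. intros N _. rewrite sum_n_Reals. apply cond_pos_sum. intros k.
      pose proof (pos_INR k). pose proof (pow_le q k ltac:(lra)). apply Rmult_le_pos; [apply Rmult_le_pos; lra|auto].
    - apply filterlim_const.
    - exact HSq. }
  assert (HDconv : forall w, (Cmod w <= rho')%R -> exists s, Cseries (Db b) w s).
  { intros w Hw.
    assert (Hex : ex_series (fun k => (B / rho * ((INR k + 1) * (INR k + 1) * q ^ k))%R)).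
    { exists (B / rho * Sq)%R. apply (is_series_scal (K := R_AbsRing) (V := R_NormedModule)). exact HSq. }
    destruct (@ex_series_le C_AbsRing C_CompleteNormedModule (fun k => Db b k * w ^ k) (fun k => (B / rho * ((INR k + 1) * (INR k + 1) * q ^ k))%R)) as [s Hs].
    2: exact Hex. 2:{ exists s. exact Hs. }
    intros k. change (norm (Db b k * w ^ k)) with (Cmod (Db b k * w ^ k)).
    unfold Db. rewrite !Cmod_mult, Cmod_pow, Cmod_RtoC_pos by (apply pos_INR).
    pose proof (HBk (S k)). pose proof (pos_INR k). pose proof (Cmod_ge_0 (b (S k))).
    assert (Hwk : (Cmod w ^ k <= rho' ^ k)%R) by (apply pow_incr; split; [apply Cmod_ge_0|auto]).
    assert (Hrk : (0 < rho ^ k)%R) by (apply pow_lt; lra).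
    rewrite S_INR.
    replace (q ^ k)%R with (rho' ^ k / rho ^ k)%R by (rewrite <- Hqr, Rpow_mult_distr; field; lra).
    simpl in H.
    apply Rle_trans with ((INR k + 1) * Cmod (b (S k)) * rho' ^ k)%R.
    { apply Rmult_le_compat_l. apply Rmult_le_pos; lra. auto. }
    apply (Rmult_le_reg_r (rho * rho ^ k)). apply Rmult_lt_0_compat; lra.
    replace (B / rho * ((INR k + 1) * (INR k + 1) * (rho' ^ k / rho ^ k)) * (rho * rho ^ k))%R
      with (B * (INR k + 1) * (INR k + 1) * rho' ^ k)%R by (field; lra).
    assert (0 <= rho' ^ k)%R by (apply pow_le; lra).
    replace ((INR k + 1) * Cmod (b (S k)) * rho' ^ k * (rho * rho ^ k))%R
      with ((INR k + 1) * rho' ^ k * (Cmod (b (S k)) * (rho * rho ^ k)))%R by ring.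
    apply Rle_trans with ((INR k + 1) * rho' ^ k * B)%R.
    apply Rmult_le_compat_l. apply Rmult_le_pos; lra. auto.
    replace (B * (INR k + 1) * (INR k + 1) * rho' ^ k)%R with ((INR k + 1) * rho' ^ k * (B * (INR k + 1)))%R by ring.
    apply Rmult_le_compat_l. apply Rmult_le_pos; lra. nra. }
  assert (HD : Cseries (Db b) z (PS (Db b) z)) by (apply PS_spec, HDconv; fold r; lra).
  split; [|exact HD].
  set (S1 := PS (Db b) z) in *.
  set (K := (B / (rho' ^ 2) * Sq)%R).
  assert (HK : (0 <= K)%R) by (unfold K; apply Rmult_le_pos; auto; apply Rdiv_le_0_compat; auto; apply pow_lt; lra).
  intros eps Heps.
  exists (Rmin (rho' - r) (eps / (K + 1))). split.
  { apply Rmin_pos. lra. apply Rdiv_lt_0_compat; lra. }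
  intros y Hy.
  assert (Hy1 : (Cmod (y - z) < rho' - r)%R) by (eapply Rlt_le_trans; [exact Hy|apply Rmin_l]).
  assert (Hy2 : (Cmod (y - z) < eps / (K + 1))%R) by (eapply Rlt_le_trans; [exact Hy|apply Rmin_r]).
  assert (Hyr : (Cmod y <= rho')%R).
  { replace y with ((y - z) + z) by ring. eapply Rle_trans. apply Cmod_triangle. fold r. lra. }
  assert (HyU : inU y) by (unfold inU; lra).
  assert (HzU : inU z) by (unfold inU; fold r; lra).
  pose proof (PS_spec b y (Hb y HyU)) as Sy.
  pose proof (PS_spec b z (Hb z HzU)) as Sz.
  set (T := fun k => b k * (RtoC (INR k) * z ^ (pred k) * (y - z))).
  assert (HT : @is_series C_AbsRing C_NormedModule T (S1 * (y - z))).
  { apply isC_shift. unfold T. simpl. ring.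
    apply (isC_ext (fun k => (y - z) * (Db b k * z ^ k)) _ ((y - z) * S1)).
    { intros k. unfold T, Db. simpl. ring. } ring.
    apply isC_scal. exact HD. }
  assert (HE : @is_series C_AbsRing C_NormedModule
     (fun k => b k * (y ^ k - z ^ k - RtoC (INR k) * z ^ (pred k) * (y - z)))
     (PS b y - PS b z - S1 * (y - z))).
  { pose proof (isC_minus _ _ _ _ (isC_minus _ _ _ _ Sy Sz) HT) as H.
    eapply isC_ext; [| |exact H]. intros k. unfold T; simpl. ring. reflexivity. }
  eapply Rle_trans.
  - apply (series_norm_le _ _ (fun k => (B / rho' ^ 2 * Cmod (y - z) ^ 2 * ((INR k + 1) * (INR k + 1) * q ^ k)))%R (B / rho' ^ 2 * Cmod (y - z) ^ 2 * Sq)%R HE).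
    + intros k. rewrite Cmod_mult.
      pose proof (e_bound y z rho' k ltac:(lra) Hyr ltac:(fold r; lra)) as He.
      set (Ek := Cmod (y ^ k - z ^ k - RtoC (INR k) * z ^ pred k * (y - z))) in *.
      pose proof (HBk k). pose proof (pos_INR k). pose proof (Cmod_ge_0 (b k)).
      assert (HEk : (0 <= Ek)%R) by apply Cmod_ge_0.
      assert (Hrk : (0 < rho ^ k)%R) by (apply pow_lt; lra).
      assert (Hr'k : (0 < rho' ^ k)%R) by (apply pow_lt; lra).
      assert (Hr'2 : (0 < rho' ^ 2)%R) by (apply pow_lt; lra).
      replace (q ^ k)%R with (rho' ^ k / rho ^ k)%R by (rewrite <- Hqr, Rpow_mult_distr; field; lra).
      apply (Rmult_le_reg_r (rho' ^ 2 * rho ^ k)). apply Rmult_lt_0_compat; lra.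
      replace (B / rho' ^ 2 * Cmod (y - z) ^ 2 * ((INR k + 1) * (INR k + 1) * (rho' ^ k / rho ^ k)) * (rho' ^ 2 * rho ^ k))%R
        with (B * ((INR k + 1) * (INR k + 1) * rho' ^ k * Cmod (y - z) ^ 2))%R by (field; lra).
      replace (Cmod (b k) * Ek * (rho' ^ 2 * rho ^ k))%R with ((Cmod (b k) * rho ^ k) * (rho' ^ 2 * Ek))%R by ring.
      assert (H2 : (INR k * INR k * rho' ^ k * Cmod (y - z) ^ 2 <= (INR k + 1) * (INR k + 1) * rho' ^ k * Cmod (y - z) ^ 2)%R).
      { pose proof (pow2_ge_0 (Cmod (y - z))). apply Rmult_le_compat_r; auto. apply Rmult_le_compat_r; [lra|]. nra. }
      apply Rle_trans with (B * (rho' ^ 2 * Ek))%R.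
      apply Rmult_le_compat_r; nra.
      apply Rmult_le_compat_l; lra.
    + exact (is_series_scal (K := R_AbsRing) (V := R_NormedModule) (B / rho' ^ 2 * Cmod (y - z) ^ 2)%R _ _ HSq).
  - idtac.
    replace (B / rho' ^ 2 * Cmod (y - z) ^ 2 * Sq)%R with (K * Cmod (y - z) * Cmod (y - z))%R by (unfold K; ring).
    pose proof (Cmod_ge_0 (y - z)).
    assert (K * Cmod (y - z) <= eps)%R.
    { apply Rle_trans with ((K + 1) * Cmod (y - z))%R. nra.
      apply (Rmult_lt_compat_l (K + 1)) in Hy2; [|lra].
      replace ((K + 1) * (eps / (K + 1)))%R with eps in Hy2 by (field; lra). lra. }
    nra.
Qed.

Lemma cos_lip (a b : R) : (Rabs (cos b - cos a) <= Rabs (b - a))%R.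
Proof.
  destruct (Rtotal_order a b) as [H|[H|H]].
  - destruct (MVT_cor2 cos (fun x => - sin x)%R a b H) as [c [Hc _]].
    { intros c _. apply derivable_pt_lim_cos. }
    rewrite Hc, Rabs_mult. pose proof (SIN_bound c). rewrite Rabs_Ropp.
    assert (Rabs (sin c) <= 1)%R by (apply Rabs_le; lra). pose proof (Rabs_pos (b - a)). nra.
  - subst. rewrite !Rminus_diag, Rabs_R0. lra.
  - destruct (MVT_cor2 cos (fun x => - sin x)%R b a H) as [c [Hc _]].
    { intros c _. apply derivable_pt_lim_cos. }
    rewrite <- Rabs_Ropp, Ropp_minus_distr, Hc, Rabs_mult, <- (Rabs_Ropp (b - a)), Ropp_minus_distr.
    pose proof (SIN_bound c). rewrite Rabs_Ropp.
    assert (Rabs (sin c) <= 1)%R by (apply Rabs_le; lra). pose proof (Rabs_pos (a - b)). nra.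
Qed.

Lemma sin_lip (a b : R) : (Rabs (sin b - sin a) <= Rabs (b - a))%R.
Proof.
  destruct (Rtotal_order a b) as [H|[H|H]].
  - destruct (MVT_cor2 sin cos a b H) as [c [Hc _]].
    { intros c _. apply derivable_pt_lim_sin. }
    rewrite Hc, Rabs_mult. pose proof (COS_bound c).
    assert (Rabs (cos c) <= 1)%R by (apply Rabs_le; lra). pose proof (Rabs_pos (b - a)). nra.
  - subst. rewrite !Rminus_diag, Rabs_R0. lra.
  - destruct (MVT_cor2 sin cos b a H) as [c [Hc _]].
    { intros c _. apply derivable_pt_lim_sin. }
    rewrite <- Rabs_Ropp, Ropp_minus_distr, Hc, Rabs_mult, <- (Rabs_Ropp (b - a)), Ropp_minus_distr.
    pose proof (COS_bound c).
    assert (Rabs (cos c) <= 1)%R by (apply Rabs_le; lra). pose proof (Rabs_pos (a - b)). nra.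
Qed.

Definition pol (r t : R) : C := ((r * cos t)%R, (r * sin t)%R).

Lemma Cmod_pol r t : Cmod (pol r t) = Rabs r.
Proof.
  unfold pol, Cmod. simpl. rewrite <- sqrt_Rsqr_abs. f_equal. unfold Rsqr.
  pose proof (sin2_cos2 t). unfold Rsqr in H. nra.
Qed.

Lemma pol_lip r t r' t' : (Cmod (pol r' t' - pol r t) <= 2 * Rabs (r' - r) + 2 * Rabs r * Rabs (t' - t))%R.
Proof.
  eapply Rle_trans. apply Cmod_le_sum. unfold pol. simpl.
  replace (r' * cos t' + - (r * cos t))%R with ((r' - r) * cos t' + r * (cos t' - cos t))%R by ring.
  replace (r' * sin t' + - (r * sin t))%R with ((r' - r) * sin t' + r * (sin t' - sin t))%R by ring.
  pose proof (cos_lip t t'). pose proof (sin_lip t t').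
  pose proof (COS_bound t'). pose proof (SIN_bound t').
  assert (Rabs (cos t') <= 1)%R by (apply Rabs_le; lra).
  assert (Rabs (sin t') <= 1)%R by (apply Rabs_le; lra).
  pose proof (Rabs_pos (r' - r)). pose proof (Rabs_pos r).
  pose proof (Rabs_triang ((r' - r) * cos t') (r * (cos t' - cos t))).
  pose proof (Rabs_triang ((r' - r) * sin t') (r * (sin t' - sin t))).
  rewrite !Rabs_mult in *. nra.
Qed.

Lemma polar_rep (w : C) : exists t, (0 <= t <= 2 * PI)%R /\ w = pol (Cmod w) t.
Proof.
  destruct (Ceq_dec w 0) as [E|E].
  { subst. exists 0%R. split. pose proof PI_RGT_0. lra. rewrite Cmod_0. unfold pol. rewrite !Rmult_0_l. reflexivity. }
  assert (Hm : (0 < Cmod w)%R) by (apply Cmod_gt_0; auto).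
  destruct w as [x y].
  assert (Hm2 : (Cmod (x, y) * Cmod (x, y) = x * x + y * y)%R).
  { unfold Cmod. simpl. rewrite sqrt_sqrt. ring. nra. }
  set (m := Cmod (x, y)) in *.
  set (c := (x / m)%R).
  assert (Hc : (-1 <= c <= 1)%R).
  { unfold c. split.
    - apply (Rmult_le_reg_r m). auto. unfold Rdiv. rewrite Rmult_assoc, Rinv_l; nra.
    - apply (Rmult_le_reg_r m). auto. unfold Rdiv. rewrite Rmult_assoc, Rinv_l; nra. }
  assert (Hs : sqrt (1 - c²) = (Rabs y / m)%R).
  { apply Rsqr_inj. apply sqrt_pos. apply Rdiv_le_0_compat. apply Rabs_pos. auto.
    rewrite Rsqr_sqrt. 2:{ unfold Rsqr. nra. }
    unfold c, Rsqr. assert (Ey : (Rabs y * Rabs y = y * y)%R) by (rewrite <- Rabs_mult; apply Rabs_right; nra). apply (Rmult_eq_reg_r (m * m)); [|nra]. replace (Rabs y / m * (Rabs y / m) * (m * m))%R with (Rabs y * Rabs y)%R by (field; lra). rewrite Ey. replace ((1 - x / m * (x / m)) * (m * m))%R with (m * m - x * x)%R by (field; lra). lra. }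
  pose proof PI_RGT_0.
  destruct (Rle_or_lt 0 y) as [Hy|Hy].
  - exists (acos c). pose proof (acos_bound c). split. lra.
    unfold pol. rewrite cos_acos, sin_acos; auto. rewrite Hs. rewrite Rabs_right by lra.
    unfold c. f_equal; field; lra.
  - exists (2 * PI - acos c)%R. pose proof (acos_bound c). split. lra.
    unfold pol. rewrite cos_minus, sin_minus, cos_2PI, sin_2PI, cos_acos, sin_acos; auto. rewrite Hs. rewrite Rabs_left by lra.
    unfold c. f_equal; field; lra.
Qed.

Module M_F.
Local Open Scope R_scope.

Definition cont2 (V : R -> R -> R) (x y : R) : Prop :=
  forall eps, 0 < eps -> exists del, 0 < del /\ forall x' y', Rabs (x' - x) < del -> Rabs (y' - y) < del ->
    Rabs (V x' y' - V x y) < eps.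

Lemma cont_pt_intro (f : R -> R) (x : R) :
  (forall eps, 0 < eps -> exists del, 0 < del /\ forall x', Rabs (x' - x) < del -> Rabs (f x' - f x) < eps) ->
  continuity_pt f x.
Proof.
  intros H eps Heps. destruct (H eps Heps) as [d [Hd Hb]]. exists d. split. lra.
  intros x' [_ Hx']. apply Hb. exact Hx'.
Qed.

Lemma UC2 (V : R -> R -> R) (a b c d : R) :
  (forall x y, a <= x <= b -> c <= y <= d -> cont2 V x y) ->
  forall eps, 0 < eps -> exists dd, 0 < dd /\ forall x y x' y', a <= x <= b -> c <= y <= d ->
    Rabs (x' - x) < dd -> Rabs (y' - y) < dd -> Rabs (V x' y' - V x y) < eps.
Proof.
  intros Hc eps Heps.
  set (Pd := fun u v del => 0 < del /\ (a <= u <= b -> c <= v <= d -> forall x' y', Rabs (x' - u) < del -> Rabs (y' - v) < del -> Rabs (V x' y' - V u v) < eps / 2)).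
  assert (Hex : forall u v, exists del, Pd u v del).
  { intros u v. destruct (classic (a <= u <= b /\ c <= v <= d)) as [[Hu Hv]|Hn].
    - destruct (Hc u v Hu Hv (eps / 2) ltac:(lra)) as [del [Hdel Hb]]. exists del. split; auto.
    - exists 1. split. lra. intros Hu Hv. exfalso. tauto. }
  set (dfun := fun u v => epsilon (inhabits 1) (Pd u v)).
  assert (Hsp : forall u v, Pd u v (dfun u v)) by (intros u v; apply epsilon_spec; apply Hex).
  assert (Hdpos : forall u v, 0 < dfun u v / 2) by (intros u v; destruct (Hsp u v); lra).
  destruct (compactness_value_2d a b c d (fun u v => mkposreal _ (Hdpos u v))) as [dd Hdd].
  exists dd. split. apply cond_pos. intros x y x' y' Hx Hy Hxx Hyy.
  destruct (classic (Rabs (V x' y' - V x y) < eps)) as [H|H]; auto. exfalso.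
  apply (Hdd x y Hx Hy). intros [u [v [Hu [Hv [Hxu [Hyv Hdu]]]]]]. simpl in *.
  destruct (Hsp u v) as [Hd Hb]. specialize (Hb Hu Hv).
  assert (H1 : Rabs (V x y - V u v) < eps / 2).
  { apply Hb; lra. }
  assert (H2 : Rabs (V x' y' - V u v) < eps / 2).
  { apply Hb.
    - replace (x' - u) with ((x' - x) + (x - u)) by ring. eapply Rle_lt_trans. apply Rabs_triang.
      lra.
    - replace (y' - v) with ((y' - y) + (y - v)) by ring. eapply Rle_lt_trans. apply Rabs_triang.
      lra. }
  apply H. replace (V x' y' - V x y) with ((V x' y' - V u v) - (V x y - V u v)) by ring.
  eapply Rle_lt_trans. apply Rabs_triang. rewrite Rabs_Ropp. lra.
Qed.

Lemma EVT2 (V : R -> R -> R) (a b c d eta : R) : a <= b -> c <= d -> 0 < eta ->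
  (forall x y, a - eta <= x <= b + eta -> c <= y <= d -> cont2 V x y) ->
  exists x0 y0, a <= x0 <= b /\ c <= y0 <= d /\
    forall x y, a <= x <= b -> c <= y <= d -> V x y <= V x0 y0.
Proof.
  intros Hab Hcd Heta Hc.
  set (PY := fun x y => c <= y <= d /\ forall y', c <= y' <= d -> V x y' <= V x y).
  assert (HY : forall x, a - eta <= x <= b + eta -> exists y, PY x y).
  { intros x Hx. destruct (continuity_ab_maj (fun y => V x y) c d Hcd) as [y [Hy1 Hy2]].
    - intros y Hy. apply cont_pt_intro. intros eps Heps.
      destruct (Hc x y Hx Hy eps Heps) as [del [Hdel Hb]]. exists del. split; auto.
      intros y' Hy'. apply Hb; auto. rewrite Rminus_diag, Rabs_R0. auto.
    - exists y. split; auto. }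
  set (Y := fun x => epsilon (inhabits c) (PY x)).
  assert (HYs : forall x, a - eta <= x <= b + eta -> PY x (Y x)) by (intros x Hx; apply epsilon_spec; apply HY; auto).
  set (m := fun x => V x (Y x)).
  destruct (continuity_ab_maj m a b Hab) as [x0 [Hm Hx0]].
  - intros x Hx. apply cont_pt_intro. intros eps Heps.
    destruct (UC2 V (a - eta) (b + eta) c d Hc eps Heps) as [dd [Hdd Hb]].
    exists (Rmin dd eta). split. apply Rmin_pos; auto.
    intros x' Hx'.
    assert (Hx'1 : Rabs (x' - x) < dd) by (eapply Rlt_le_trans; [exact Hx'|apply Rmin_l]).
    assert (Hx'2 : Rabs (x' - x) < eta) by (eapply Rlt_le_trans; [exact Hx'|apply Rmin_r]).
    assert (Hxr : a - eta <= x <= b + eta) by lra.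
    assert (Hx'r : a - eta <= x' <= b + eta) by (apply Rabs_def2 in Hx'2; lra).
    destruct (HYs x Hxr) as [HYx HYxm]. destruct (HYs x' Hx'r) as [HYx' HYx'm].
    unfold m.
    assert (E1 : Rabs (V x' (Y x) - V x (Y x)) < eps).
    { apply Hb; auto. rewrite Rminus_diag, Rabs_R0. auto. }
    assert (E2 : Rabs (V x (Y x') - V x' (Y x')) < eps).
    { apply Hb; auto. rewrite Rabs_minus_sym; auto. rewrite Rminus_diag, Rabs_R0. auto. }
    pose proof (HYx'm (Y x) HYx). pose proof (HYxm (Y x') HYx').
    apply Rabs_def2 in E1. apply Rabs_def2 in E2. apply Rabs_def1; lra.
  - exists x0, (Y x0). assert (Hx0r : a - eta <= x0 <= b + eta) by lra.
    destruct (HYs x0 Hx0r) as [HY0 _]. split; auto. split; auto.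
    intros x y Hx Hy. assert (Hxr : a - eta <= x <= b + eta) by lra.
    destruct (HYs x Hxr) as [_ HYm]. eapply Rle_trans. apply HYm; auto.
    apply (Hm x Hx).
Qed.

Lemma deriv_zero_max (u : R -> R) (l d : R) : 0 < d -> derivable_pt_lim u 0 l ->
  (forall t, Rabs t < d -> u t <= u 0) -> l = 0.
Proof.
  intros Hd Hl Hm.
  pose proof (deriv_maximum u (- d) d 0 (exist _ l Hl) ltac:(lra) ltac:(lra)) as H.
  simpl in H. apply H. intros x H1 H2. apply Hm. apply Rabs_def1; lra.
Qed.

Lemma SDT (u u1 : R -> R) (s d : R) : 0 < d ->
  (forall t, Rabs t < d -> derivable_pt_lim u t (u1 t)) -> derivable_pt_lim u1 0 s ->
  (forall t, Rabs t < d -> u t <= u 0) -> s <= 0.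
Proof.
  intros Hd Hu Hs Hm.
  assert (H0 : u1 0 = 0).
  { apply (deriv_zero_max u (u1 0) d Hd). apply Hu. rewrite Rabs_R0. auto. auto. }
  destruct (Rle_or_lt s 0) as [H|H]; auto. exfalso.
  destruct (Hs (s / 2) ltac:(lra)) as [d1 Hd1].
  set (t := Rmin d d1 / 2).
  assert (Ht : 0 < t /\ t < d /\ t < d1).
  { unfold t. pose proof (Rmin_l d d1). pose proof (Rmin_r d d1). pose proof (Rmin_pos d d1 Hd (cond_pos d1)). lra. }
  destruct (MVT_cor2 u u1 0 t ltac:(lra)) as [c [Hc Hct]].
  { intros c Hc. apply Hu. apply Rabs_def1; lra. }
  assert (Hc1 : 0 < u1 c).
  { specialize (Hd1 c ltac:(lra) ltac:(rewrite Rabs_right; lra)).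
    rewrite Rplus_0_l, H0, Rminus_0_r in Hd1. apply Rabs_def2 in Hd1.
    destruct Hd1 as [_ Hd1].
    assert (0 < u1 c / c) by lra.
    apply (Rmult_lt_compat_r c) in H1; [|lra]. unfold Rdiv in H1. rewrite Rmult_assoc, Rinv_l in H1; lra. }
  assert (u t <= u 0) by (apply Hm; apply Rabs_def1; lra).
  assert (0 < u1 c * (t - 0)) by (apply Rmult_lt_0_compat; lra).
  lra.
Qed.

End M_F.
Import M_F.

Lemma der_lin (a b t : R) : derivable_pt_lim (fun s => a + s * b)%R t b.
Proof. apply is_derive_Reals. auto_derive; auto. ring. Qed.

Lemma der_u (X Y P Q : R -> R) (eps t X1 Y1 P1 Q1 : R) :
  derivable_pt_lim X t X1 -> derivable_pt_lim Y t Y1 -> derivable_pt_lim P t P1 -> derivable_pt_lim Q t Q1 ->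
  derivable_pt_lim (fun s => X s * X s + Y s * Y s + eps * (P s * P s + Q s * Q s))%R t
    (2 * X t * X1 + 2 * Y t * Y1 + eps * (2 * P t * P1 + 2 * Q t * Q1))%R.
Proof.
  intros HX HY HP HQ.
  pose proof (derivable_pt_lim_plus _ _ _ _ _ (derivable_pt_lim_plus _ _ _ _ _ (derivable_pt_lim_mult _ _ _ _ _ HX HX) (derivable_pt_lim_mult _ _ _ _ _ HY HY))
     (derivable_pt_lim_mult _ _ _ _ _ (derivable_pt_lim_const eps t) (derivable_pt_lim_plus _ _ _ _ _ (derivable_pt_lim_mult _ _ _ _ _ HP HP) (derivable_pt_lim_mult _ _ _ _ _ HQ HQ)))) as H.
  unfold plus_fct, mult_fct, fct_cte in H.
  replace (2 * X t * X1 + 2 * Y t * Y1 + eps * (2 * P t * P1 + 2 * Q t * Q1))%R with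
    (X1 * X t + X t * X1 + (Y1 * Y t + Y t * Y1) + (0 * (P t * P t + Q t * Q t) + eps * (P1 * P t + P t * P1 + (Q1 * Q t + Q t * Q1))))%R by ring.
  exact H.
Qed.

Lemma der_u1 (X Y P Q X1 Y1 : R -> R) (eps ex ey X2 Y2 : R) :
  derivable_pt_lim X 0 (X1 0) -> derivable_pt_lim Y 0 (Y1 0) -> derivable_pt_lim P 0 ex -> derivable_pt_lim Q 0 ey ->
  derivable_pt_lim X1 0 X2 -> derivable_pt_lim Y1 0 Y2 ->
  derivable_pt_lim (fun s => 2 * X s * X1 s + 2 * Y s * Y1 s + eps * (2 * P s * ex + 2 * Q s * ey))%R 0
    (2 * (X1 0 * X1 0 + X 0 * X2) + 2 * (Y1 0 * Y1 0 + Y 0 * Y2) + eps * (2 * ex * ex + 2 * ey * ey))%R.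
Proof.
  intros HX HY HP HQ HX1 HY1.
  pose proof (derivable_pt_lim_const 2 0) as H2.
  pose proof (derivable_pt_lim_const ex 0) as Hex.
  pose proof (derivable_pt_lim_const ey 0) as Hey.
  pose proof (derivable_pt_lim_const eps 0) as Heps.
  pose proof (derivable_pt_lim_plus _ _ _ _ _ (derivable_pt_lim_plus _ _ _ _ _
     (derivable_pt_lim_mult _ _ _ _ _ (derivable_pt_lim_mult _ _ _ _ _ H2 HX) HX1)
     (derivable_pt_lim_mult _ _ _ _ _ (derivable_pt_lim_mult _ _ _ _ _ H2 HY) HY1))
     (derivable_pt_lim_mult _ _ _ _ _ Heps (derivable_pt_lim_plus _ _ _ _ _
        (derivable_pt_lim_mult _ _ _ _ _ (derivable_pt_lim_mult _ _ _ _ _ H2 HP) Hex)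
        (derivable_pt_lim_mult _ _ _ _ _ (derivable_pt_lim_mult _ _ _ _ _ H2 HQ) Hey)))) as H.
  unfold plus_fct, mult_fct, fct_cte in H.
  match type of H with derivable_pt_lim _ _ ?L => replace (2 * (X1 0 * X1 0 + X 0 * X2) + 2 * (Y1 0 * Y1 0 + Y 0 * Y2) + eps * (2 * ex * ex + 2 * ey * ey))%R with L by ring end.
  exact H.
Qed.

Lemma Cmod_dir (t ex ey : R) : (ex * ex + ey * ey = 1)%R -> Cmod ((t * ex)%R, (t * ey)%R) = Rabs t.
Proof.
  intros H. replace ((t * ex)%R, (t * ey)%R) with (RtoC t * (ex, ey)).
  2:{ unfold RtoC. apply injective_projections; simpl; ring. }
  rewrite Cmod_mult, Cmod_R. unfold Cmod. simpl. replace (ex * (ex * 1) + ey * (ey * 1))%R with 1%R by lra.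
  rewrite sqrt_1. ring.
Qed.

Definition vfun (g : C -> C) (eps : R) (z : C) : R :=
  (Re (g z) * Re (g z) + Im (g z) * Im (g z) + eps * (Re z * Re z + Im z * Im z))%R.

Lemma dir_second (g g1 g2 : C -> C) (eps : R) (z1 : C) (d ex ey : R) :
  (ex * ex + ey * ey = 1)%R -> (0 < d)%R ->
  (forall z, (Cmod (z - z1) < d)%R -> CD g z (g1 z) /\ CD g1 z (g2 z)) ->
  (forall z, (Cmod (z - z1) < d)%R -> (vfun g eps z <= vfun g eps z1)%R) ->
  (2 * (Re ((ex, ey) * g1 z1) * Re ((ex, ey) * g1 z1) + Re (g z1) * Re ((ex, ey) * g2 z1 * (ex, ey)))
   + 2 * (Im ((ex, ey) * g1 z1) * Im ((ex, ey) * g1 z1) + Im (g z1) * Im ((ex, ey) * g2 z1 * (ex, ey)))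
   + eps * (2 * ex * ex + 2 * ey * ey) <= 0)%R.
Proof.
  intros He Hd HD Hm.
  set (e := (ex, ey) : C).
  set (P := fun s => (Re z1 + s * ex)%R). set (Q := fun s => (Im z1 + s * ey)%R).
  assert (HPQ : forall s, Cmod ((P s, Q s) - z1) = Rabs s).
  { intros s. rewrite <- (Cmod_dir s ex ey He). f_equal. destruct z1 as [x1 y1]. unfold P, Q. simpl.
    apply injective_projections; simpl; ring. }
  assert (Hz1 : (P 0, Q 0) = z1). { destruct z1. unfold P, Q. simpl. f_equal; ring. }
  set (X := fun s => Re (g (P s, Q s))). set (Y := fun s => Im (g (P s, Q s))).
  set (X1 := fun s => Re (e * g1 (P s, Q s))). set (Y1 := fun s => Im (e * g1 (P s, Q s))).
  assert (HdX : forall t, (Rabs t < d)%R -> derivable_pt_lim X t (X1 t) /\ derivable_pt_lim Y t (Y1 t)).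
  { intros t Ht. destruct (HD (P t, Q t)) as [Hg _]. rewrite HPQ; auto.
    split.
    - pose proof (RC g P Q t ex ey _ (der_lin _ _ _) (der_lin _ _ _) Hg) as H.
      unfold X1. rewrite Cmult_comm. exact H.
    - pose proof (RC_im g P Q t ex ey _ (der_lin _ _ _) (der_lin _ _ _) Hg) as H.
      unfold Y1. rewrite Cmult_comm. exact H. }
  assert (Hg10 : CD (fun z => e * g1 z) (P 0, Q 0) (e * g2 (P 0, Q 0))).
  { apply CD_scal. apply HD. rewrite HPQ, Rabs_R0. auto. }
  pose proof (RC _ P Q 0 ex ey _ (der_lin _ _ _) (der_lin _ _ _) Hg10) as HX1.
  pose proof (RC_im _ P Q 0 ex ey _ (der_lin _ _ _) (der_lin _ _ _) Hg10) as HY1.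
  fold X1 in HX1. fold Y1 in HY1. fold e in HX1, HY1.
  set (u := fun s => (X s * X s + Y s * Y s + eps * (P s * P s + Q s * Q s))%R).
  set (u1 := fun s => (2 * X s * X1 s + 2 * Y s * Y1 s + eps * (2 * P s * ex + 2 * Q s * ey))%R).
  assert (Hu : forall t, (Rabs t < d)%R -> derivable_pt_lim u t (u1 t)).
  { intros t Ht. destruct (HdX t Ht). apply der_u; auto; apply der_lin. }
  destruct (HdX 0%R ltac:(rewrite Rabs_R0; auto)) as [HX0 HY0].
  pose proof (der_u1 X Y P Q X1 Y1 eps ex ey _ _ HX0 HY0 (der_lin _ _ _) (der_lin _ _ _) HX1 HY1) as Hu1.
  fold u1 in Hu1.
  assert (Hmax : forall t, (Rabs t < d)%R -> (u t <= u 0)%R).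
  { intros t Ht. unfold u, X, Y. pose proof (Hm (P t, Q t)) as H. rewrite HPQ in H. specialize (H Ht).
    unfold vfun in H. rewrite <- Hz1 in H. simpl in H. rewrite Hz1 in *. exact H. }
  pose proof (SDT u u1 _ d Hd Hu Hu1 Hmax) as Hs.
  unfold X1, Y1, X, Y in Hs. rewrite Hz1 in Hs. exact Hs.
Qed.

Lemma no_int_max (g g1 g2 : C -> C) (eps : R) (z1 : C) (d : R) :
  (0 < eps)%R -> (0 < d)%R ->
  (forall z, (Cmod (z - z1) < d)%R -> CD g z (g1 z) /\ CD g1 z (g2 z)) ->
  (forall z, (Cmod (z - z1) < d)%R -> (vfun g eps z <= vfun g eps z1)%R) -> False.
Proof.
  intros He Hd HD Hm.
  pose proof (dir_second g g1 g2 eps z1 d 1 0 ltac:(lra) Hd HD Hm) as H1.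
  pose proof (dir_second g g1 g2 eps z1 d 0 1 ltac:(lra) Hd HD Hm) as H2.
  destruct (g1 z1) as [a b]. destruct (g2 z1) as [c e]. destruct (g z1) as [x y].
  simpl in H1, H2. nra.
Qed.

Lemma vfun_alt g eps z : vfun g eps z = (Cmod (g z) ^ 2 + eps * Cmod z ^ 2)%R.
Proof. unfold vfun. rewrite !Cmod2_alt. ring. Qed.

Definition ccont (h : C -> R) (w : C) : Prop :=
  forall eps, (0 < eps)%R -> exists del, (0 < del)%R /\ forall y, (Cmod (y - w) < del)%R -> (Rabs (h y - h w) < eps)%R.

Lemma sqmod_cont (h : C -> C) (w : C) :
  (forall eps, (0 < eps)%R -> exists del, (0 < del)%R /\ forall y, (Cmod (y - w) < del)%R -> (Cmod (h y - h w) < eps)%R) ->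
  ccont (fun y => Cmod (h y) ^ 2)%R w.
Proof.
  intros H eps Heps. pose proof (Cmod_ge_0 (h w)) as Hw0.
  set (e1 := Rmin 1 (eps / (2 * Cmod (h w) + 1))).
  assert (He1 : (0 < e1)%R) by (unfold e1; apply Rmin_pos; [lra|apply Rdiv_lt_0_compat; lra]).
  destruct (H e1 He1) as [d [Hd Hb]]. exists d. split; auto.
  intros y Hy. specialize (Hb y Hy).
  pose proof (Cmod_sub_tri (h y) (h w)). pose proof (Cmod_sub_tri (h w) (h y)).
  replace (h w - h y) with (- (h y - h w)) in H1 by ring. rewrite Cmod_opp in H1.
  pose proof (Cmod_ge_0 (h y)).
  assert (Hl1 : (e1 <= 1)%R) by apply Rmin_l.
  assert (Hl2 : (e1 * (2 * Cmod (h w) + 1) <= eps)%R).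
  { pose proof (Rmin_r 1 (eps / (2 * Cmod (h w) + 1))). fold e1 in H3.
    apply (Rmult_le_compat_r (2 * Cmod (h w) + 1)) in H3; [|lra].
    replace (eps / (2 * Cmod (h w) + 1) * (2 * Cmod (h w) + 1))%R with eps in H3 by (field; lra). lra. }
  replace (Cmod (h y) ^ 2 - Cmod (h w) ^ 2)%R with ((Cmod (h y) - Cmod (h w)) * (Cmod (h y) + Cmod (h w)))%R by ring.
  rewrite Rabs_mult. rewrite (Rabs_right (Cmod (h y) + Cmod (h w))) by lra.
  assert (Rabs (Cmod (h y) - Cmod (h w)) < e1)%R by (apply Rabs_def1; lra).
  assert (Cmod (h y) + Cmod (h w) <= 2 * Cmod (h w) + 1)%R by lra.
  pose proof (Rabs_pos (Cmod (h y) - Cmod (h w))).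
  apply Rle_lt_trans with (Rabs (Cmod (h y) - Cmod (h w)) * (2 * Cmod (h w) + 1))%R.
  apply Rmult_le_compat_l; lra. nra.
Qed.

Lemma vfun_cont (g g1 : C -> C) (eps : R) (w : C) : CD g w (g1 w) -> ccont (vfun g eps) w.
Proof.
  intros Hg e He.
  destruct (sqmod_cont g w (CD_cont g w _ Hg) (e / 2)%R ltac:(lra)) as [d1 [Hd1 B1]].
  destruct (sqmod_cont (fun x => x) w (fun ep Hep => ex_intro _ ep (conj Hep (fun y H => H))) (e / 2 / (Rabs eps + 1))%R ltac:(apply Rdiv_lt_0_compat; [lra| pose proof (Rabs_pos eps); lra])) as [d2 [Hd2 B2]].
  exists (Rmin d1 d2). split. apply Rmin_pos; auto.
  intros y Hy. rewrite !vfun_alt.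
  specialize (B1 y ltac:(eapply Rlt_le_trans; [exact Hy|apply Rmin_l])).
  specialize (B2 y ltac:(eapply Rlt_le_trans; [exact Hy|apply Rmin_r])). cbv beta in B2, B1.
  replace (Cmod (g y) ^ 2 + eps * Cmod y ^ 2 - (Cmod (g w) ^ 2 + eps * Cmod w ^ 2))%R
    with ((Cmod (g y) ^ 2 - Cmod (g w) ^ 2) + eps * (Cmod y ^ 2 - Cmod w ^ 2))%R by ring.
  eapply Rle_lt_trans. apply Rabs_triang. rewrite Rabs_mult.
  assert (Rabs eps * Rabs (Cmod y ^ 2 - Cmod w ^ 2) <= e / 2)%R.
  { pose proof (Rabs_pos eps). pose proof (Rabs_pos (Cmod y ^ 2 - Cmod w ^ 2)).
    apply Rle_trans with ((Rabs eps + 1) * Rabs (Cmod y ^ 2 - Cmod w ^ 2))%R. nra.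
    apply (Rmult_lt_compat_l (Rabs eps + 1)) in B2; [|lra].
    replace ((Rabs eps + 1) * (e / 2 / (Rabs eps + 1)))%R with (e / 2)%R in B2 by (field; lra). lra. }
  lra.
Qed.

Lemma pol_cont (v : C -> R) (r t : R) : ccont v (pol r t) -> cont2 (fun r t => v (pol r t)) r t.
Proof.
  intros Hv eps Heps. destruct (Hv eps Heps) as [d [Hd Hb]].
  pose proof (Rabs_pos r).
  exists (d / (2 + 2 * Rabs r + 1))%R. split. apply Rdiv_lt_0_compat; lra.
  intros r' t' Hr Ht. apply Hb.
  eapply Rle_lt_trans. apply pol_lip.
  assert (E : ((2 + 2 * Rabs r + 1) * (d / (2 + 2 * Rabs r + 1)) = d)%R) by (field; lra).
  set (q := (d / (2 + 2 * Rabs r + 1))%R) in *.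
  assert (0 < q)%R by (unfold q; apply Rdiv_lt_0_compat; lra).
  assert (2 * Rabs r * Rabs (t' - t) <= 2 * Rabs r * q)%R by (apply Rmult_le_compat_l; lra).
  nra.
Qed.

Lemma maxp (g g1 g2 : C -> C) (rho G2 : R) : (0 < rho < 1)%R ->
  (forall z, inU z -> CD g z (g1 z) /\ CD g1 z (g2 z)) ->
  (forall t, (Cmod (g (pol rho t)) ^ 2 <= G2)%R) ->
  forall a, (Cmod a <= rho)%R -> (Cmod (g a) ^ 2 <= G2)%R.
Proof.
  intros Hrho HD HG a Ha.
  destruct (Rle_or_lt (Cmod (g a) ^ 2) G2) as [H|H]; auto. exfalso.
  set (D := (Cmod (g a) ^ 2 - G2)%R).
  set (eps := (D / (2 * (rho * rho + 1)))%R).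
  assert (Heps : (0 < eps)%R) by (unfold eps, D; apply Rdiv_lt_0_compat; nra).
  assert (Heps2 : (eps * (rho * rho) < D)%R).
  { unfold eps. assert (E : (D / (2 * (rho * rho + 1)) * (rho * rho) = D * (rho * rho / (2 * (rho * rho + 1))))%R) by (field; nra).
    rewrite E. assert (rho * rho / (2 * (rho * rho + 1)) < 1)%R.
    { apply (Rmult_lt_reg_r (2 * (rho * rho + 1))). nra. unfold Rdiv. rewrite Rmult_assoc, Rinv_l; nra. }
    unfold D in *. nra. }
  set (V := fun r t => vfun g eps (pol r t)).
  pose proof PI_RGT_0 as HPI.
  destruct (EVT2 V 0 rho 0 (2 * PI) ((1 - rho) / 2) ltac:(lra) ltac:(lra) ltac:(lra)) as [r0 [t0 [Hr0 [Ht0 Hmax]]]].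
  { intros x y Hx Hy. apply pol_cont.
    assert (HU : inU (pol x y)) by (unfold inU; rewrite Cmod_pol; apply Rabs_def1; lra).
    destruct (HD _ HU) as [Hg _]. exact (vfun_cont g (g1) eps _ Hg). }
  destruct (polar_rep a) as [ta [Hta Ea]].
  assert (Hva : (vfun g eps a <= V r0 t0)%R).
  { rewrite Ea. apply (Hmax (Cmod a) ta). split; [apply Cmod_ge_0|auto]. auto. }
  assert (Hva2 : (Cmod (g a) ^ 2 <= vfun g eps a)%R).
  { rewrite vfun_alt. pose proof (pow2_ge_0 (Cmod a)). nra. }
  destruct (Rle_lt_or_eq_dec r0 rho ltac:(lra)) as [Hlt|Heq].
  - set (z1 := pol r0 t0).
    assert (Hz1 : Cmod z1 = r0) by (unfold z1; rewrite Cmod_pol; apply Rabs_right; lra).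
    apply (no_int_max g g1 g2 eps z1 (rho - r0) Heps ltac:(lra)).
    + intros z Hz. apply HD. unfold inU.
      replace z with ((z - z1) + z1) by ring. eapply Rle_lt_trans. apply Cmod_triangle. lra.
    + intros z Hz. destruct (polar_rep z) as [tz [Htz Ez]].
      assert (Cmod z <= rho)%R.
      { replace z with ((z - z1) + z1) by ring. eapply Rle_trans. apply Cmod_triangle. lra. }
      rewrite Ez. apply (Hmax (Cmod z) tz). split; [apply Cmod_ge_0|auto]. auto.
  - subst r0. unfold V in Hva. rewrite !vfun_alt, Cmod_pol, Rabs_right in Hva by lra.
    specialize (HG t0). unfold D in *. nra.
Qed.

Lemma left_max_deriv (f : R -> R) (x D d : R) : (0 < d)%R -> derivable_pt_lim f x D ->
  (forall h, (0 < h < d)%R -> (f (x - h) <= f x)%R) -> (0 <= D)%R.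
Proof.
  intros Hd HD Hm. destruct (Rle_or_lt 0 D) as [H|H]; auto. exfalso.
  destruct (HD (- D / 2)%R ltac:(lra)) as [d1 Hd1].
  set (h := (Rmin d d1 / 2)%R).
  assert (Hh : (0 < h /\ h < d /\ h < d1)%R).
  { unfold h. pose proof (Rmin_l d d1). pose proof (Rmin_r d d1). pose proof (Rmin_pos d d1 Hd (cond_pos d1)). lra. }
  specialize (Hd1 (- h)%R ltac:(lra) ltac:(rewrite Rabs_Ropp, Rabs_right; lra)).
  apply Rabs_def2 in Hd1. destruct Hd1 as [Hd1 _].
  specialize (Hm h ltac:(lra)).
  replace (x + - h)%R with (x - h)%R in Hd1 by ring.
  set (q := ((f (x - h) - f x) / - h)%R) in *.
  assert (Hq : (q < 0)%R) by lra.
  assert (E : (f (x - h) - f x = q * (- h))%R) by (unfold q; field; lra).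
  nra.
Qed.

Lemma der_cos_path (r t : R) : derivable_pt_lim (fun s => r * cos s)%R t (- r * sin t)%R.
Proof. apply is_derive_Reals. auto_derive; auto. ring. Qed.
Lemma der_sin_path (r t : R) : derivable_pt_lim (fun s => r * sin s)%R t (r * cos t)%R.
Proof. apply is_derive_Reals. auto_derive; auto. ring. Qed.
Lemma der_rcos (c t : R) : derivable_pt_lim (fun s => s * c)%R t c.
Proof. apply is_derive_Reals. auto_derive; auto. ring. Qed.

Lemma jack (g g1 g2 : C -> C) (rho : R) (z0 : C) : (0 < rho < 1)%R ->
  (forall z, inU z -> CD g z (g1 z) /\ CD g1 z (g2 z)) ->
  Cmod z0 = rho ->
  (forall z, Cmod z = rho -> (Cmod (g z) ^ 2 <= Cmod (g z0) ^ 2)%R) ->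
  Im (Cconj (g z0) * g1 z0 * z0) = 0%R /\ (0 <= Re (Cconj (g z0) * g1 z0 * z0))%R.
Proof.
  intros Hrho HD Hz0 Hmax.
  assert (Hdisk : forall a, (Cmod a <= rho)%R -> (Cmod (g a) ^ 2 <= Cmod (g z0) ^ 2)%R).
  { apply (maxp g g1 g2 rho _ Hrho HD). intros t. apply Hmax. rewrite Cmod_pol. apply Rabs_right. lra. }
  destruct (polar_rep z0) as [t0 [Ht0 E0]]. rewrite Hz0 in E0.
  assert (HU0 : inU z0) by (unfold inU; lra).
  destruct (HD z0 HU0) as [Hg0 _].
  set (P := fun s => (rho * cos s)%R). set (Q := fun s => (rho * sin s)%R).
  assert (HPQ0 : (P t0, Q t0) = z0) by (rewrite E0; reflexivity).
  assert (Hg0' : CD g (P t0, Q t0) (g1 z0)) by (rewrite HPQ0; exact Hg0).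
  pose proof (der_u (fun s => Re (g (P s, Q s))) (fun s => Im (g (P s, Q s))) P Q 0 t0 _ _ _ _
    (RC g P Q t0 _ _ _ (der_cos_path rho t0) (der_sin_path rho t0) Hg0')
    (RC_im g P Q t0 _ _ _ (der_cos_path rho t0) (der_sin_path rho t0) Hg0')
    (der_cos_path rho t0) (der_sin_path rho t0)) as Ht.
  pose proof (deriv_maximum _ (t0 - 1) (t0 + 1) t0 (exist _ _ Ht) ltac:(lra) ltac:(lra)) as Hz.
  simpl in Hz.
  assert (Ht1 : forall x, (Re (g (P x, Q x)) * Re (g (P x, Q x)) + Im (g (P x, Q x)) * Im (g (P x, Q x)) + 0 * (P x * P x + Q x * Q x) <= Re (g (P t0, Q t0)) * Re (g (P t0, Q t0)) + Im (g (P t0, Q t0)) * Im (g (P t0, Q t0)) + 0 * (P t0 * P t0 + Q t0 * Q t0))%R).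
  { intros x. rewrite !Rmult_0_l, !Rplus_0_r.
    pose proof (Hmax (P x, Q x)) as H. rewrite HPQ0.
    assert (Cmod (P x, Q x) = rho) by (change (P x, Q x) with (pol rho x); rewrite Cmod_pol; apply Rabs_right; lra).
    specialize (H H0). rewrite !Cmod2_alt in H. simpl in H. lra. }
  specialize (Hz (fun x _ _ => Ht1 x)).
  set (P2 := fun s => (s * cos t0)%R). set (Q2 := fun s => (s * sin t0)%R).
  assert (HPQ2 : (P2 rho, Q2 rho) = z0) by (rewrite E0; unfold P2, Q2, pol; reflexivity).
  assert (Hg2' : CD g (P2 rho, Q2 rho) (g1 z0)) by (rewrite HPQ2; exact Hg0).
  pose proof (der_u (fun s => Re (g (P2 s, Q2 s))) (fun s => Im (g (P2 s, Q2 s))) P2 Q2 0 rho _ _ _ _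
    (RC g P2 Q2 rho _ _ _ (der_rcos (cos t0) rho) (der_rcos (sin t0) rho) Hg2')
    (RC_im g P2 Q2 rho _ _ _ (der_rcos (cos t0) rho) (der_rcos (sin t0) rho) Hg2')
    (der_rcos (cos t0) rho) (der_rcos (sin t0) rho)) as Hr.
  pose proof (left_max_deriv _ _ _ rho ltac:(lra) Hr) as Hr1.
  assert (Hr2 : (0 <= 2 * Re (g (P2 rho, Q2 rho)) * Re (g1 z0 * (cos t0, sin t0)) +
      2 * Im (g (P2 rho, Q2 rho)) * Im (g1 z0 * (cos t0, sin t0)) + 0 * (2 * P2 rho * cos t0 + 2 * Q2 rho * sin t0))%R).
  { apply Hr1. intros h Hh. rewrite !Rmult_0_l, !Rplus_0_r.
    pose proof (Hdisk (P2 (rho - h)%R, Q2 (rho - h)%R)) as H. rewrite HPQ2.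
    assert (Cmod (P2 (rho - h)%R, Q2 (rho - h)%R) <= rho)%R.
    { change (P2 (rho - h)%R, Q2 (rho - h)%R) with (pol (rho - h) t0). rewrite Cmod_pol. rewrite Rabs_right; lra. }
    specialize (H H0). rewrite !Cmod2_alt in H. simpl in H. lra. }
  rewrite HPQ0 in Hz. rewrite HPQ2 in Hr2.
  unfold P, Q in Hz. unfold P2, Q2 in Hr2.
  rewrite E0 in Hz, Hr2 |- *. unfold pol in *.
  destruct (g (rho * cos t0, rho * sin t0)%R) as [X Y]. destruct (g1 (rho * cos t0, rho * sin t0)%R) as [a b].
  simpl in *. split; nra.
Qed.

Lemma isC_zero : @is_series C_AbsRing C_NormedModule (fun _ => RtoC 0) (RtoC 0).
Proof.
  intros P [eps HP]. exists 0%nat. intros N _. apply HP.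
  match goal with |- ball _ _ ?X => replace X with (RtoC 0) end.
  apply ball_center.
  clear. induction N.
  - rewrite sum_O. reflexivity.
  - rewrite sum_Sn. rewrite <- IHN. unfold plus; simpl. ring.
Qed.

Lemma Cseries_at0 (c : nat -> C) : Cseries c 0 (c 0%nat).
Proof.
  unfold Cseries. apply is_series_decr_1.
  match goal with |- is_series _ ?L => replace L with (RtoC 0) end.
  - eapply isC_ext; [| |exact isC_zero]. intros k. simpl. ring. reflexivity.
  - unfold plus, opp; simpl. ring.
Qed.

Lemma U_open (z : C) : inU z -> forall y, (Cmod (y - z) < 1 - Cmod z)%R -> inU y.
Proof.
  intros Hz y Hy. unfold inU in *. replace y with ((y - z) + z) by ring.
  eapply Rle_lt_trans. apply Cmod_triangle. lra.
Qed.

Lemma deriv_series (b : nat -> C) (h h1 : C -> C) :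
  (forall z, inU z -> Cseries b z (h z)) -> (forall z, inU z -> CD h z (h1 z)) ->
  forall z, inU z -> h1 z = PS (Db b) z /\ Cseries (Db b) z (h1 z) /\ h z = PS b z.
Proof.
  intros Hs Hd z Hz.
  assert (Hc : convU b) by (intros w Hw; exists (h w); auto).
  assert (Hh : forall w, inU w -> h w = PS b w).
  { intros w Hw. apply (Cseries_unique b w). auto. apply PS_spec. exists (h w); auto. }
  destruct (PSD b Hc z Hz) as [H1 H2].
  assert (E : h1 z = PS (Db b) z).
  { apply (CD_unique h z). apply Hd; auto.
    eapply CD_ext; [|exact H1]. exists (1 - Cmod z)%R. split. unfold inU in Hz; lra.
    intros y Hy. symmetry. apply Hh. apply (U_open z Hz y Hy). }
  split; auto. split. rewrite E. auto. auto.
Qed.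

Lemma shift_series (m : nat) : forall (c : nat -> C) z s, Cseries c z s -> (forall k, (k < m)%nat -> c k = 0) ->
  exists s', Cseries (fun k => c (k + m)%nat) z s' /\ s = z ^ m * s'.
Proof.
  induction m; intros c z s Hs Hc.
  - exists s. split. eapply isC_ext; [| |exact Hs]. intros k. rewrite Nat.add_0_r. reflexivity. reflexivity.
    simpl. ring.
  - assert (Hc0 : c 0%nat = 0) by (apply Hc; lia).
    assert (Hs1 : exists s1, Cseries (fun k => c (S k)) z s1 /\ s = z * s1).
    { destruct (Ceq_dec z 0) as [Ez|Ez].
      - subst z. exists (c 1%nat). split. apply (Cseries_at0 (fun k => c (S k))).
        pose proof (Cseries_at0 c) as H0. rewrite (Cseries_unique c 0 s (c 0%nat) Hs H0). rewrite Hc0. ring.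
      - exists (s / z). split.
        + pose proof (isC_unshift _ _ Hs) as H. pose proof (isC_scal (/ z) _ _ H) as H2.
          eapply isC_ext; [| |exact H2].
          * intros k. simpl. field. auto.
          * simpl. rewrite Hc0. field. auto.
        + field. auto. }
  destruct Hs1 as [s1 [Hs1 E1]].
  destruct (IHm (fun k => c (S k)) z s1 Hs1) as [s' [Hs' E']].
  { intros k Hk. apply Hc. lia. }
  exists s'. split.
  + eapply isC_ext; [| |exact Hs']. intros k. simpl. f_equal. f_equal. lia. reflexivity.
  + rewrite E1, E'. simpl. ring.
Qed.

Module M_K.
Local Open Scope R_scope.

Lemma final_ineq (k nn p M u v : R) : nn <= k -> 0 < nn -> 0 < p -> p <= M ->
  M <= sqrt (u * u + v * v) -> 0 < (p + u) * (p + u) + v * v ->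
  nn * M / (M + p) <= k * ((p * u + (u * u + v * v)) / ((p + u) * (p + u) + v * v)).
Proof.
  intros Hk Hn Hp HpM HM HD.
  set (R := sqrt (u * u + v * v)) in *.
  assert (HR2 : R * R = u * u + v * v) by (unfold R; apply sqrt_sqrt; nra).
  assert (HR0 : 0 <= R) by (unfold R; apply sqrt_pos).
  assert (Hu : u <= R) by nra.
  set (D := (p + u) * (p + u) + v * v) in *.
  set (A := (p * u + (u * u + v * v)) / D).
  assert (H1 : M / (M + p) <= A).
  { unfold A. apply (Rmult_le_reg_r ((M + p) * D)). apply Rmult_lt_0_compat; lra.
    replace (M / (M + p) * ((M + p) * D)) with (M * D) by (field; lra).
    replace ((p * u + (u * u + v * v)) / D * ((M + p) * D)) with ((p * u + (u * u + v * v)) * (M + p)) by (field; lra).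
    assert (E : (p * u + (u * u + v * v)) * (M + p) - M * D = p * ((R - M) * (R + p) + (R - u) * (M - p))).
    { unfold D. replace (v * v) with (R * R - u * u) by lra. ring. }
    assert (0 <= (R - M) * (R + p)) by (apply Rmult_le_pos; lra).
    assert (0 <= (R - u) * (M - p)) by (apply Rmult_le_pos; lra).
    assert (0 <= p * ((R - M) * (R + p) + (R - u) * (M - p))) by (apply Rmult_le_pos; lra).
    lra. }
  assert (H0 : 0 <= M / (M + p)) by (unfold Rdiv; apply Rmult_le_pos; [lra|left; apply Rinv_0_lt_compat; lra]).
  unfold Rdiv at 1. rewrite Rmult_assoc. fold (M / (M + p)).
  apply Rle_trans with (nn * A). apply Rmult_le_compat_l; lra.
  apply Rmult_le_compat_r; lra.
Qed.

End M_K.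
Import M_K.

Lemma RtoC_neq (r : R) : r <> 0%R -> RtoC r <> 0.
Proof. intros H E. apply H. apply (f_equal fst) in E. simpl in E. exact E. Qed.

Lemma Cseries_xderiv (b : nat -> C) (w s : C) : Cseries (Db b) w s ->
  Cseries (fun k => RtoC (INR k) * b k) w (w * s).
Proof.
  intros Hd. unfold Cseries in *. apply isC_shift. simpl. ring.
  eapply isC_ext; [| |exact (isC_scal w _ _ Hd)]. intros k. unfold Db. simpl. ring. reflexivity.
Qed.

Lemma PSD2 (b : nat -> C) : convU b -> forall w, inU w ->
  CD (PS b) w (PS (Db b) w) /\ CD (PS (Db b)) w (PS (Db (Db b)) w).
Proof.
  intros Hc w Hw. destruct (PSD b Hc w Hw) as [H1 _]. split; auto.
  assert (Hc2 : convU (Db b)) by (intros y Hy; exists (PS (Db b) y); apply (PSD b Hc y Hy)).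
  apply (PSD (Db b) Hc2 w Hw).
Qed.

Theorem corollary3p11 (n p : nat) (lam M : R) (a : nat -> C)
    (f f1 F1 F2 : C -> C) :
  (1 <= n)%nat -> (1 <= p)%nat -> (0 <= lam <= 1)%R ->
  (* f(z) = z^p + sum_{k >= p+n} a_k z^k on U *)
  a p = 1 ->
  (forall k : nat, k <> p -> (k < p + n)%nat -> a k = 0) ->
  (forall z, inU z -> Cseries a z (f z)) ->
  (* f1 = f', F1 = F_lambda', F2 = F_lambda'' on U *)
  (forall z, inU z -> Cderiv f z (f1 z)) ->
  (forall z, inU z -> Cderiv (Flam lam f f1) z (F1 z)) ->
  (forall z, inU z -> Cderiv F1 z (F2 z)) ->
  (forall z, inU z -> z <> 0 -> Flam lam f f1 z * F1 z <> 0) ->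
  (INR p <= M)%R ->
  (forall z, inU z -> z <> 0 ->
     Re (- (z * F1 z / Flam lam f f1 z) + 1 + z * F2 z / F1 z)
       < INR n * M / (M + INR p))%R ->
  forall z, inU z -> z <> 0 ->
    (Cmod (z * F1 z / Flam lam f f1 z - RtoC (INR p)) < M)%R.
Proof.
  intros Hn Hp Hlam Hap Ha0 Hf Hf1 HF1 HF2 HFnz HM Hre z Hz Hz0.
  set (F := Flam lam f f1) in *.
  assert (Hfd : forall w, inU w -> CD f w (f1 w)) by (intros; apply Cderiv_CD; auto).
  pose proof (deriv_series a f f1 Hf Hfd) as Da.
  set (A := fun k => ((1 - RtoC lam) + RtoC lam * RtoC (INR k)) * a k).
  assert (HA : forall w, inU w -> Cseries A w (F w)).
  { intros w Hw. destruct (Da w Hw) as [_ [Hd1 _]]. pose proof (Hf w Hw) as H0.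
    pose proof (Cseries_xderiv a w _ Hd1) as Hc.
    unfold Cseries in *.
    pose proof (isC_plus _ _ _ _ (isC_scal (1 - RtoC lam) _ _ H0) (isC_scal (RtoC lam) _ _ Hc)) as H.
    eapply isC_ext; [| |exact H].
    - intros k. unfold A. ring.
    - unfold F, Flam. ring. }
  assert (HFd : forall w, inU w -> CD F w (F1 w)) by (intros; apply Cderiv_CD; auto).
  pose proof (deriv_series A F F1 HA HFd) as DA.
  assert (HzF1 : forall w, inU w -> Cseries (fun k => RtoC (INR k) * A k) w (w * F1 w)).
  { intros w Hw. destruct (DA w Hw) as [_ [Hd1 _]]. apply Cseries_xderiv. auto. }
  assert (HA0 : forall k, k <> p -> (k < p + n)%nat -> A k = 0).
  { intros k Hk1 Hk2. unfold A. rewrite Ha0; auto. ring. }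
  set (Hs := fun k => A (k + p)%nat).
  set (Gc := fun k => (RtoC (INR k) - RtoC (INR p)) * A k).
  set (Js := fun k => Gc (k + (p + n))%nat).
  assert (HHs : forall w, inU w -> Cseries Hs w (PS Hs w) /\ F w = w ^ p * PS Hs w).
  { intros w Hw. destruct (shift_series p A w (F w) (HA w Hw)) as [s' [Hs' E]].
    { intros k Hk. apply HA0; lia. }
    assert (Hc : Cseries Hs w (PS Hs w)) by (apply PS_spec; exists s'; exact Hs').
    split; auto. rewrite E. f_equal. apply (Cseries_unique Hs w); auto. }
  assert (HJs : forall w, inU w -> Cseries Js w (PS Js w) /\ w * F1 w - RtoC (INR p) * F w = w ^ (p + n) * PS Js w).
  { intros w Hw.
    assert (HG : Cseries Gc w (w * F1 w - RtoC (INR p) * F w)).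
    { unfold Cseries. pose proof (isC_minus _ _ _ _ (HzF1 w Hw) (isC_scal (RtoC (INR p)) _ _ (HA w Hw))) as H.
      eapply isC_ext; [| |exact H]. intros k. unfold Gc. ring. reflexivity. }
    destruct (shift_series (p + n) Gc w _ HG) as [s' [Hs' E]].
    { intros k Hk. unfold Gc. destruct (Nat.eq_dec k p) as [->|Hne]. ring. rewrite HA0; auto. ring. }
    assert (Hc : Cseries Js w (PS Js w)) by (apply PS_spec; exists s'; exact Hs').
    split; auto. rewrite E. f_equal. apply (Cseries_unique Js w); auto. }
  assert (cHs : convU Hs) by (intros w Hw; exists (PS Hs w); apply HHs; auto).
  assert (cJs : convU Js) by (intros w Hw; exists (PS Js w); apply HJs; auto).
  set (H0 := PS Hs). set (J0 := PS Js). set (H1 := PS (Db Hs)). set (J1 := PS (Db Js)).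
  set (H2 := PS (Db (Db Hs))). set (J2 := PS (Db (Db Js))).
  assert (HAp : A p <> 0).
  { unfold A. rewrite Hap. rewrite Cmult_1_r.
    replace (1 - RtoC lam + RtoC lam * RtoC (INR p)) with (RtoC (1 - lam + lam * INR p)).
    2:{ unfold RtoC. apply injective_projections; simpl; ring. }
    apply RtoC_neq. assert (1 <= INR p)%R by (apply (le_INR 1); auto). simpl in H. nra. }
  assert (HH0 : forall w, inU w -> H0 w <> 0).
  { intros w Hw. destruct (Ceq_dec w 0) as [->|Hw0].
    - unfold H0. rewrite (Cseries_unique Hs 0 (PS Hs 0) (Hs 0%nat)). unfold Hs. simpl. auto.
      apply HHs. unfold inU. rewrite Cmod_0. lra. apply Cseries_at0.
    - intro E. apply (HFnz w Hw Hw0). fold F. destruct (HHs w Hw) as [_ EF]. rewrite EF. fold H0. rewrite E. ring. }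
  set (g := fun w => J0 w / H0 w).
  set (g1 := fun w => (J1 w * H0 w - J0 w * H1 w) / (H0 w * H0 w)).
  assert (HDg : forall w, inU w -> CD g w (g1 w) /\ exists l, CD g1 w l).
  { intros w Hw. destruct (PSD2 Hs cHs w Hw) as [dH0 dH1]. destruct (PSD2 Js cJs w Hw) as [dJ0 dJ1].
    fold H0 H1 H2 in dH0, dH1. fold J0 J1 J2 in dJ0, dJ1.
    split. apply CD_div; auto.
    eexists. apply CD_div.
    - apply CD_minus; apply CD_mult; eauto.
    - apply CD_mult; eauto.
    - apply Cmult_neq_0; apply HH0; auto. }
  set (g2 := fun w => epsilon (inhabits (RtoC 0)) (fun l => CD g1 w l)).
  assert (HD : forall w, inU w -> CD g w (g1 w) /\ CD g1 w (g2 w)).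
  { intros w Hw. destruct (HDg w Hw) as [Hg Hg1]. split; auto. apply epsilon_spec. exact Hg1. }
  assert (Hrel : forall w, inU w -> w <> 0 -> w * F1 w / F w - RtoC (INR p) = w ^ n * g w).
  { intros w Hw Hw0. destruct (HHs w Hw) as [_ EF]. destruct (HJs w Hw) as [_ EJ]. fold H0 in EF. fold J0 in EJ.
    assert (HFw : F w <> 0). { intro E. apply (HFnz w Hw Hw0). fold F. rewrite E. ring. }
    replace (w * F1 w / F w - RtoC (INR p)) with ((w * F1 w - RtoC (INR p) * F w) / F w) by (field; auto).
    rewrite EJ, EF. unfold g. rewrite Cpow_add_r. field. split. apply HH0; auto. apply Cpow_nz; auto. }
  destruct (Rlt_or_le (Cmod (z * F1 z / F z - RtoC (INR p))) M) as [Hok|Hbad]; auto. exfalso.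
  set (rho := Cmod z).
  assert (Hrho : (0 < rho < 1)%R).
  { split. unfold rho. apply Cmod_gt_0. auto. exact Hz. }
  pose proof PI_RGT_0 as HPI.
  destruct (continuity_ab_maj (fun t => vfun g 0 (pol rho t)) 0 (2 * PI) ltac:(lra)) as [t0 [Hmt Ht0]].
  { intros c Hc. apply cont_pt_intro. intros e He.
    assert (HU : inU (pol rho c)) by (unfold inU; rewrite Cmod_pol, Rabs_right; lra).
    destruct (HD _ HU) as [Hg _].
    destruct (pol_cont _ rho c (vfun_cont g g1 0 _ Hg) e He) as [d [Hd Hb]].
    exists d. split; auto. intros x' Hx'. apply Hb; auto. rewrite Rminus_diag, Rabs_R0. auto. }
  set (z0 := pol rho t0).
  assert (Hz0m : Cmod z0 = rho) by (unfold z0; rewrite Cmod_pol, Rabs_right; lra).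
  assert (Hmax : forall w, Cmod w = rho -> (Cmod (g w) ^ 2 <= Cmod (g z0) ^ 2)%R).
  { intros w Hw. destruct (polar_rep w) as [tw [Htw Ew]]. rewrite Hw in Ew.
    pose proof (Hmt tw Htw) as H. simpl in H. rewrite !vfun_alt in H. rewrite <- Ew in H. fold z0 in H. lra. }
  destruct (jack g g1 g2 rho z0 Hrho HD Hz0m Hmax) as [Hjim Hjre].
  assert (HU0 : inU z0) by (unfold inU; lra).
  assert (Hz00 : z0 <> 0) by (intro E; rewrite E, Cmod_0 in Hz0m; lra).
  set (g0 := g z0). set (w0 := z0 ^ n * g0).
  assert (Hw0M : (M <= Cmod w0)%R).
  { pose proof (Hmax z eq_refl) as Hmz. fold g0 in Hmz.
    rewrite (Hrel z Hz Hz0) in Hbad. unfold w0. rewrite Cmod_mult, Cmod_pow in *. fold rho in Hbad. rewrite Hz0m.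
    pose proof (Cmod_ge_0 (g z)). pose proof (Cmod_ge_0 g0).
    assert (Cmod (g z) <= Cmod g0)%R by nra.
    pose proof (pow_le rho n ltac:(lra)).
    apply Rle_trans with (rho ^ n * Cmod (g z))%R; auto. apply Rmult_le_compat_l; auto. }
  assert (HM0 : (0 < M)%R) by (assert (1 <= INR p)%R by (apply (le_INR 1); auto); simpl in *; lra).
  assert (Hg00 : g0 <> 0).
  { intro E. unfold w0 in Hw0M. rewrite E, Cmult_0_r, Cmod_0 in Hw0M. lra. }
  assert (HFz : F z0 <> 0). { intro E. apply (HFnz z0 HU0 Hz00). fold F. rewrite E. ring. }
  assert (HF1z : F1 z0 <> 0). { intro E. apply (HFnz z0 HU0 Hz00). fold F. rewrite E. ring. }
  assert (Hphi : CD (fun y => y * F1 y / F y) z0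
     (((1 * F1 z0 + z0 * F2 z0) * F z0 - z0 * F1 z0 * F1 z0) / (F z0 * F z0))).
  { assert (Hm1 : CD (fun y => y * F1 y) z0 (1 * F1 z0 + z0 * F2 z0)).
    { apply (CD_mult (fun y => y) F1 z0 1 (F2 z0)). apply CD_id. apply Cderiv_CD. auto. }
    exact (CD_div (fun y => y * F1 y) F z0 _ _ Hm1 (HFd z0 HU0) HFz). }
  destruct n as [|m]; [lia|].
  assert (Hpsi : CD (fun y => RtoC (INR p) + y ^ S m * g y) z0 (0 + (RtoC (INR (S m)) * z0 ^ m * g z0 + z0 ^ S m * g1 z0))).
  { apply CD_plus. apply CD_const. apply CD_mult. apply CD_pow. apply HD; auto. }
  assert (Heqd : ((1 * F1 z0 + z0 * F2 z0) * F z0 - z0 * F1 z0 * F1 z0) / (F z0 * F z0)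
                 = 0 + (RtoC (INR (S m)) * z0 ^ m * g z0 + z0 ^ S m * g1 z0)).
  { apply (CD_unique (fun y => y * F1 y / F y) z0); auto.
    eapply CD_ext; [|exact Hpsi]. exists (Rmin rho (1 - rho)). split. apply Rmin_pos; lra.
    intros y Hy. assert (HyU : inU y).
    { apply (U_open z0 HU0). rewrite Hz0m. eapply Rlt_le_trans; [exact Hy|apply Rmin_r]. }
    assert (Hy0 : y <> 0).
    { intro E. subst y. replace (0 - z0) with (- z0) in Hy by ring. rewrite Cmod_opp, Hz0m in Hy.
      pose proof (Rmin_l rho (1 - rho)). lra. }
    rewrite <- (Hrel y HyU Hy0). ring. }
  set (c := Cconj g0 * g1 z0 * z0) in *.
  set (kk := (INR (S m) + Re c / Cmod g0 ^ 2)%R).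
  assert (Hc : c = RtoC (Re c)).
  { apply injective_projections; [reflexivity|]. simpl. exact Hjim. }
  assert (Hg0c : Cconj g0 <> 0). { intro E. apply Hg00. rewrite <- (Cconj_conj g0), E. unfold Cconj. simpl. apply injective_projections; simpl; ring. }
  assert (Hcm : RtoC (Cmod g0 ^ 2) = g0 * Cconj g0) by (rewrite <- Cmod2_conj; rewrite RtoC_pow; reflexivity).
  assert (Hcm0 : (Cmod g0 ^ 2 <> 0)%R). { pose proof (proj1 (Cmod_gt_0 g0) Hg00). apply Rgt_not_eq. apply pow_lt. auto. }
  assert (HphiE : z0 * F1 z0 / F z0 = RtoC (INR p) + w0).
  { rewrite <- (Rplus_0_r (INR p)). unfold w0, g0. rewrite <- (Hrel z0 HU0 Hz00). rewrite RtoC_plus. ring. }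
  assert (Hpw : RtoC (INR p) + w0 <> 0).
  { rewrite <- HphiE. intro E.
    assert (E2 : z0 * F1 z0 = 0) by (replace (z0 * F1 z0) with (z0 * F1 z0 / F z0 * F z0) by (field; auto); rewrite E; ring).
    apply (Cmult_neq_0 z0 (F1 z0) Hz00 HF1z E2). }
  assert (HE : - (z0 * F1 z0 / F z0) + 1 + z0 * F2 z0 / F1 z0 = RtoC kk * (w0 / (RtoC (INR p) + w0))).
  { transitivity (z0 * (((1 * F1 z0 + z0 * F2 z0) * F z0 - z0 * F1 z0 * F1 z0) / (F z0 * F z0)) / (z0 * F1 z0 / F z0)).
    { field. repeat split; auto. }
    rewrite Heqd, HphiE. unfold kk. rewrite RtoC_plus, RtoC_div by auto. rewrite <- Hc, Hcm.
    unfold c, w0, g0. rewrite Cpow_S. field. split; [|split; auto]. intro E. apply Hpw. unfold w0, g0. rewrite Cpow_S. exact E. }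
  pose proof (Hre z0 HU0 Hz00) as Hr. fold F in Hr. rewrite HE in Hr.
  rewrite re_scal_l in Hr.
  assert (Hkk : (INR (S m) <= kk)%R).
  { unfold kk. assert (0 <= Re c / Cmod g0 ^ 2)%R.
    { unfold Rdiv. apply Rmult_le_pos; auto. left. apply Rinv_0_lt_compat. pose proof (proj1 (Cmod_gt_0 g0) Hg00). apply pow_lt. auto. }
    lra. }
  assert (Hp1 : (1 <= INR p)%R) by (apply (le_INR 1); auto).
  assert (Hn1 : (0 < INR (S m))%R) by (apply lt_0_INR; lia).
  clearbody w0. destruct w0 as [u v].
  assert (Hq : Re ((u, v) / (RtoC (INR p) + (u, v))) = ((INR p * u + (u * u + v * v)) / ((INR p + u) * (INR p + u) + v * v))%R).
  { assert (HD0 : ((INR p + u) * (INR p + u) + v * v <> 0)%R).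
    { intro E. apply Hpw. pose proof (Rle_0_sqr v). pose proof (Rle_0_sqr (INR p + u)). unfold Rsqr in *.
      assert (Hv2 : (v * v = 0)%R) by lra. assert (Hu2 : ((INR p + u) * (INR p + u) = 0)%R) by lra.
      assert (v = 0)%R by (apply Rmult_integral in Hv2; destruct Hv2; auto). assert (INR p + u = 0)%R by (apply Rmult_integral in Hu2; destruct Hu2; auto).
      apply injective_projections; simpl; lra. }
    unfold Cdiv, Cinv. simpl. field. replace (INR p + u + 0)%R with (INR p + u)%R by ring.
    replace (v + 0)%R with v by ring. rewrite ?Rmult_1_r. lra. }
  rewrite Hq in Hr.
  assert (HD1 : (0 < (INR p + u) * (INR p + u) + v * v)%R).
  { destruct (Req_dec v 0) as [Ev|Ev].
    - subst v. assert (INR p + u <> 0)%R. { intro E. apply Hpw. apply injective_projections; simpl; lra. }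
      pose proof (Rsqr_pos_lt _ H). unfold Rsqr in *. lra.
    - pose proof (Rsqr_pos_lt _ Ev). pose proof (Rle_0_sqr (INR p + u)). unfold Rsqr in *. lra. }
  assert (HMs : (M <= sqrt (u * u + v * v))%R).
  { unfold Cmod in Hw0M. simpl in Hw0M. replace (u * u + v * v)%R with (u * (u * 1) + v * (v * 1))%R by ring. exact Hw0M. }
  pose proof (final_ineq kk (INR (S m)) (INR p) M u v Hkk Hn1 ltac:(lra) HM HMs HD1). lra.
Qed.
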